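(* Let $\mathcal{R}$ be a left-connected rewriting system over a signature $\Sigma$, let $L_i,L_j$ be left-hand sides of rules of $\mathcal{R}$, and let $S_{ij\gamma}$ (with $\epsilon_{ij\gamma}\colon L_i+L_j\to S_{ij\gamma}$) be a hyperedge gluing and $S_{ij\gamma'}$ (with $\epsilon_{ij\gamma'}\colon S_{ij\gamma}\to S_{ij\gamma'}$) a subsequent node gluing, as described below, such that $S_{ij\gamma'}$ yields a critical pair. If the critical pair yielded by $in(S_{ij\gamma})\to S_{ij\gamma}\leftarrow out(S_{ij\gamma})$ is joinable, then so is the critical pair yielded by $in(S_{ij\gamma'})\to S_{ij\gamma'}\leftarrow out(S_{ij\gamma'})$.
   Context: A signature $\Sigma$ is a set of triples $(x,n,m)$ (label, arity, coarity). A $\Sigma$-hypergraph $G=(V,E,s,t,l)$ has finite sets $V$ (nodes), $E$ (hyperedges), maps $s,t\colon E\to V^*$ (lists of sources/targets) and a labelling $l\colon E\to\Sigma$ sending a hyperedge with $n$ sources and $m$ targets to some $(x,n,m)$. Morphisms preserve sources, targets and labels; they form the category $\mathbf{Hyp}_\Sigma$, where colimits are computed componentwise and monos/epis are injective/surjective on nodes and hyperedges. Composition is written $f;g$; $\iota_1,\iota_2$ are coprojections. A hypergraph is discrete if it has no hyperedges. A path is a list of hyperedges $[e_1,\dots,e_n]$ with some target of $e_k$ equal to a source of $e_{k+1}$ for each $k$; it goes from $v$ to $v'$ if $v$ is a source of $e_1$ and $v'$ a target of $e_n$; a cycle is a path with some source of $e_1$ a target of $e_n$. In-degree (out-degree)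 of a node $v$: number of pairs $(e,i)$ with $v$ the $i$-th target (source) of $e$; $in(H)$, $out(H)$: nodes of in-degree $0$, out-degree $0$. $H$ is ma (monogamous acyclic) if it has no cycle and all in- and out-degrees are $\le 1$. A cospan $I\to H\leftarrow O$ with $I,O$ discrete is an ma-cospan if $H$ is ma and the legs are mono with images $in(H)$ and $out(H)$. $H$ is strongly connected if for all $x\in in(H)$, $y\in out(H)$ there is a path from $x$ to $y$. A left-connected rule is a span $L\xleftarrow{[i_L,o_L]}K=I+O\xrightarrow{[i_R,o_R]}R$ with $I,O$ discrete, $I\to L\leftarrow O$, $I\to R\leftarrow O$ ma-cospans, $[i_L,o_L]$ mono, $L$ strongly connected; a left-connected rewriting system is a finite set of such rules. A derivation $(n\to G\leftarrow m)\Rrightarrow(n\to H\leftarrow m)$ between ma-cospans via a rule $L\leftarrow K\to R$ consists of a convex match $L\to G$ (a mono such that every path in $G$ between nodes of the image has all its hyperedges in the image), a hypergraph $C$ and a diagram $G\leftarrow C\to H$, $K\to C$, $R\to H$, $n+m\to C$ with $K,L,C,G$ and $K,R,C,H$ pushout squares (the left one a boundary complement, automatic for left-connected systems) commuting with the interfaces; for left-connected systems, mono matches are convex and pushout complements exist uniquely. A pre-critical pair is a pair of derivations $(n\to H_1\leftarrow m)\Lleftarrow(n\to S\leftarrow m)\Rrightarrow(n\to H_2\leftarrow m)$ with matches $m_1\colon L_i\to S$, $m_2\colon L_j\to S$ such that $[m_1,m_2]$ is epi; it is parallel if $m_1$ factors through the pushout complement $C_2\to S$ of the second derivation and $m_2$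 through the pushout complement $C_1\to S$ of the first; critical if not parallel; joinable if there is $W$ with $(n\to H_1\leftarrow m)$ and $(n\to H_2\leftarrow m)$ both rewriting in finitely many (possibly zero) derivations to $(n\to W\leftarrow m)$. Hyperedge gluing: let $M$ be a nonempty set of pairs $(e,e')$, $e$ a hyperedge of $L_i$, $e'$ of $L_j$, with equal labels, no hyperedge in two pairs; $\gamma$ has hyperedges $M$ and nodes the pairs $(v,v')$ that are $k$-th sources (or $k$-th targets) of $e,e'$ for some $(e,e')\in M$ and $k$, with projections $p_1^\gamma\colon\gamma\to L_i$, $p_2^\gamma\colon\gamma\to L_j$; $\epsilon_{ij\gamma}\colon L_i+L_j\to S_{ij\gamma}$ is the coequaliser of $p_1^\gamma;\iota_1$ and $p_2^\gamma;\iota_2$. Node gluing: with $I_1=in(S_{ij\gamma})\cap\epsilon_{ij\gamma}(\iota_1(in(L_i)))$, $I_2=in(S_{ij\gamma})\cap\epsilon_{ij\gamma}(\iota_2(in(L_j)))$, $O_1=out(S_{ij\gamma})\cap\epsilon_{ij\gamma}(\iota_1(out(L_i)))$, $O_2=out(S_{ij\gamma})\cap\epsilon_{ij\gamma}(\iota_2(out(L_j)))$, let $N$ be a set of pairs in $I_1\times O_2$, or in $I_2\times O_1$, with no element in two pairs; $\gamma'$ is the discrete hypergraph with nodes $N$ and projections $p_1^{\gamma'},p_2^{\gamma'}\colon\gamma'\to S_{ij\gamma}$; $\epsilon_{ij\gamma'}\colon S_{ij\gamma}\to S_{ij\gamma'}$ is their coequaliser. $S_{ij\gamma}$ yields a critical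 pair if $\iota_1;\epsilon_{ij\gamma}$, $\iota_2;\epsilon_{ij\gamma}$ are mono, $in(S_{ij\gamma})\xrightarrow{\subseteq}S_{ij\gamma}\xleftarrow{\subseteq}out(S_{ij\gamma})$ is an ma-cospan and the derivations from it with these matches (via the rules with left-hand sides $L_i$, $L_j$) form a critical pair — this is ''the critical pair yielded by'' it; likewise for $S_{ij\gamma'}$ with matches $\iota_k;\epsilon_{ij\gamma};\epsilon_{ij\gamma'}$. *)

(* Defs.v *)
From mathcomp Require Import all_boot.

Set Implicit Arguments.
Unset Strict Implicit.
Unset Printing Implicit Defensive.

Record signature := Signature { sym :> Type; ar : sym -> nat; coar : sym -> nat }.

Section Hypergraphs.
Variable Sg : signature.

Record hyp := Hyp {
  hV : finType; hE : finType;
  src : hE -> seq hV; tgt : hE -> seq hV; lab : hE -> Sg;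
  src_ar : forall e, size (src e) = ar (lab e);
  tgt_ar : forall e, size (tgt e) = coar (lab e) }.

Record hom (G H : hyp) := Hom {
  hv : hV G -> hV H; he : hE G -> hE H;
  hom_src : forall e, src (he e) = map hv (src e);
  hom_tgt : forall e, tgt (he e) = map hv (tgt e);
  hom_lab : forall e, lab (he e) = lab e }.

Definition heq G H (f g : hom G H) := hv f =1 hv g /\ he f =1 he g.

Lemma hcomp_src G H K (f : hom G H) (g : hom H K) e :
  src (he g (he f e)) = map (hv g \o hv f) (src e).
Proof. by rewrite !hom_src map_comp. Qed.
Lemma hcomp_tgt G H K (f : hom G H) (g : hom H K) e :
  tgt (he g (he f e)) = map (hv g \o hv f) (tgt e).
Proof. by rewrite !hom_tgt map_comp. Qed.
Lemma hcomp_lab G H K (f : hom G H) (g : hom H K) e :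
  lab (he g (he f e)) = lab e.
Proof. by rewrite !hom_lab. Qed.
Definition hcomp G H K (f : hom G H) (g : hom H K) : hom G K :=
  @Hom G K (hv g \o hv f) (he g \o he f)
    (hcomp_src f g) (hcomp_tgt f g) (hcomp_lab f g).

Lemma hid_src G e : src e = map (@id (hV G)) (src e). Proof. by rewrite map_id. Qed.
Lemma hid_tgt G e : tgt e = map (@id (hV G)) (tgt e). Proof. by rewrite map_id. Qed.
Definition hid G : hom G G :=
  @Hom G G id id (@hid_src G) (@hid_tgt G) (fun e => erefl).

Definition coprod_src G H (e : (hE G + hE H)%type) : seq (hV G + hV H)%type :=
  match e with inl e => map inl (src e) | inr e => map inr (src e) end.
Definition coprod_tgt G H (e : (hE G + hE H)%type) : seq (hV G + hV H)%type :=
  match e with inl e => map inl (tgt e) | inr e => map inr (tgt e) end.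
Definition coprod_lab G H (e : (hE G + hE H)%type) : Sg :=
  match e with inl e => lab e | inr e => lab e end.
Lemma coprod_src_ar G H e : size (@coprod_src G H e) = ar (coprod_lab e).
Proof. by case: e => e /=; rewrite size_map src_ar. Qed.
Lemma coprod_tgt_ar G H e : size (@coprod_tgt G H e) = coar (coprod_lab e).
Proof. by case: e => e /=; rewrite size_map tgt_ar. Qed.
Definition coprod G H : hyp :=
  @Hyp (hV G + hV H)%type (hE G + hE H)%type (@coprod_src G H) (@coprod_tgt G H)
    (@coprod_lab G H) (@coprod_src_ar G H) (@coprod_tgt_ar G H).

Definition iota1 G H : hom G (coprod G H) :=
  @Hom G (coprod G H) inl inl (fun e => erefl) (fun e => erefl) (fun e => erefl).
Definition iota2 G H : hom H (coprod G H) :=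
  @Hom H (coprod G H) inr inr (fun e => erefl) (fun e => erefl) (fun e => erefl).

Section Copair.
Variables (G H K : hyp) (f : hom G K) (g : hom H K).
Definition copair_v (x : (hV G + hV H)%type) : hV K :=
  match x with inl a => hv f a | inr b => hv g b end.
Definition copair_e (x : (hE G + hE H)%type) : hE K :=
  match x with inl a => he f a | inr b => he g b end.
Lemma copair_src e : src (copair_e e) = map copair_v (coprod_src e).
Proof. by case: e => e /=; rewrite hom_src -map_comp. Qed.
Lemma copair_tgt e : tgt (copair_e e) = map copair_v (coprod_tgt e).
Proof. by case: e => e /=; rewrite hom_tgt -map_comp. Qed.
Lemma copair_lab e : lab (copair_e e) = coprod_lab e.
Proof. by case: e => e /=; rewrite hom_lab. Qed.
Definition copair : hom (coprod G H) K :=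
  @Hom (coprod G H) K copair_v copair_e copair_src copair_tgt copair_lab.
End Copair.

Definition discrete (G : hyp) := #|hE G| = 0.

Definition discrete_of (V : finType) : hyp :=
  @Hyp V void (fun e => match e with end) (fun e => match e with end)
    (fun e => match e with end) (fun e => match e with end) (fun e => match e with end).

Definition mono G H (f : hom G H) := injective (hv f) /\ injective (he f).
Definition epi G H (f : hom G H) :=
  (forall y, exists x, hv f x = y) /\ (forall y, exists x, he f x = y).

Definition indeg (G : hyp) (v : hV G) := \sum_(e : hE G) count_mem v (tgt e).
Definition outdeg (G : hyp) (v : hV G) := \sum_(e : hE G) count_mem v (src e).

Definition linked (G : hyp) (e e' : hE G) := has (fun v => v \in src e') (tgt e).
Definition is_path (G : hyp) (p : seq (hE G)) :=
  if p is e1 :: p' then path (@linked G) e1 p' else false.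
Definition path_from (G : hyp) (v v' : hV G) (p : seq (hE G)) :=
  if p is e1 :: p' then
    [&& path (@linked G) e1 p', v \in src e1 & v' \in tgt (last e1 p')]
  else false.
Definition is_cycle (G : hyp) (p : seq (hE G)) :=
  if p is e1 :: p' then
    path (@linked G) e1 p' && has (fun v => v \in src e1) (tgt (last e1 p'))
  else false.

Definition ma (G : hyp) :=
  (~ exists p : seq (hE G), is_cycle p) /\
  (forall v : hV G, indeg v <= 1 /\ outdeg v <= 1).

Definition is_ma_cospan (I O G : hyp) (i : hom I G) (o : hom O G) :=
  [/\ discrete I /\ discrete O, ma G, mono i /\ mono o,
      (forall v, indeg v = 0 <-> exists x, hv i x = v) &
      (forall v, outdeg v = 0 <-> exists x, hv o x = v)].

Definition strongly_connected (G : hyp) :=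
  forall x y : hV G, indeg x = 0 -> outdeg y = 0 -> exists p, path_from x y p.

Definition pushout (A B C D : hyp) (f : hom A B) (g : hom A C)
    (f' : hom B D) (g' : hom C D) :=
  heq (hcomp f f') (hcomp g g') /\
  forall (T : hyp) (h : hom B T) (k : hom C T), heq (hcomp f h) (hcomp g k) ->
    exists u : hom D T, [/\ heq (hcomp f' u) h, heq (hcomp g' u) k &
      forall u' : hom D T, heq (hcomp f' u') h -> heq (hcomp g' u') k -> heq u' u].

(* Coequaliser of two parallel maps gamma -> A, presented by the pairs of nodes
   and of hyperedges (p1 x, p2 x) of A they identify. *)
Definition respects (A T : hyp) (rv : hV A -> hV A -> Prop)
    (re : hE A -> hE A -> Prop) (h : hom A T) :=
  (forall x y, rv x y -> hv h x = hv h y) /\ (forall x y, re x y -> he h x = he h y).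
Definition coequaliser (A Q : hyp) (rv : hV A -> hV A -> Prop)
    (re : hE A -> hE A -> Prop) (q : hom A Q) :=
  respects rv re q /\
  forall (T : hyp) (h : hom A T), respects rv re h ->
    exists u : hom Q T, heq (hcomp q u) h /\
      forall u' : hom Q T, heq (hcomp q u') h -> heq u' u.

Record rule := Rule {
  rL : hyp; rR : hyp; rI : hyp; rO : hyp;
  iL : hom rI rL; oL : hom rO rL; iR : hom rI rR; oR : hom rO rR }.
Definition rK (r : rule) := coprod (rI r) (rO r).

Definition left_connected_rule (r : rule) :=
  [/\ is_ma_cospan (iL r) (oL r), is_ma_cospan (iR r) (oR r),
      mono (copair (iL r) (oL r)) & strongly_connected (rL r)].

Record cospan (n m : hyp) := Cospan { apex : hyp; cin : hom n apex; cout : hom m apex }.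

Definition convex_match (L G : hyp) (mu : hom L G) :=
  mono mu /\
  forall (v v' : hV G) (p : seq (hE G)),
    (exists x, hv mu x = v) -> (exists x, hv mu x = v') -> path_from v v' p ->
    forall e, e \in p -> exists x, he mu x = e.

Definition derivation (n m : hyp) (r : rule) (G H : cospan n m)
    (mu : hom (rL r) (apex G)) (C : hyp) (c : hom (rK r) C)
    (k : hom C (apex G)) (h : hom C (apex H)) (rr : hom (rR r) (apex H))
    (d : hom (coprod n m) C) :=
  [/\ is_ma_cospan (cin G) (cout G) /\ is_ma_cospan (cin H) (cout H),
      convex_match mu,
      pushout (copair (iL r) (oL r)) c mu k,
      pushout (copair (iR r) (oR r)) c rr h &
      heq (hcomp d k) (copair (cin G) (cout G)) /\
      heq (hcomp d h) (copair (cin H) (cout H))].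

Section System.
Variables (Idx : finType) (Rs : Idx -> rule).

Definition step (n m : hyp) (G H : cospan n m) :=
  exists (i : Idx) (mu : hom (rL (Rs i)) (apex G)) (C : hyp) (c : hom (rK (Rs i)) C)
    (k : hom C (apex G)) (h : hom C (apex H)) (rr : hom (rR (Rs i)) (apex H))
    (d : hom (coprod n m) C), @derivation n m (Rs i) G H mu C c k h rr d.

Inductive rewrites (n m : hyp) : cospan n m -> cospan n m -> Prop :=
| rw_refl G : rewrites G G
| rw_step G H K : step G H -> rewrites H K -> rewrites G K.

Definition cospan_iso (n m : hyp) (G H : cospan n m) :=
  exists (phi : hom (apex G) (apex H)) (psi : hom (apex H) (apex G)),
    [/\ heq (hcomp phi psi) (hid _), heq (hcomp psi phi) (hid _),
        heq (hcomp (cin G) phi) (cin H) & heq (hcomp (cout G) phi) (cout H)].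

Definition joinable (n m : hyp) (H1 H2 : cospan n m) :=
  exists W1 W2 : cospan n m, [/\ rewrites H1 W1, rewrites H2 W2 & cospan_iso W1 W2].

Definition inD (S : hyp) := discrete_of {v : hV S | indeg v == 0}.
Definition outD (S : hyp) := discrete_of {v : hV S | outdeg v == 0}.
Definition inIncl (S : hyp) : hom (inD S) S :=
  @Hom (inD S) S val (fun e => match e with end) (fun e => match e with end)
    (fun e => match e with end) (fun e => match e with end).
Definition outIncl (S : hyp) : hom (outD S) S :=
  @Hom (outD S) S val (fun e => match e with end) (fun e => match e with end)
    (fun e => match e with end) (fun e => match e with end).
Definition ioCospan (S : hyp) : cospan (inD S) (outD S) :=
  @Cospan (inD S) (outD S) S (inIncl S) (outIncl S).

Definition critical_pair (S : hyp) (i j : Idx)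
    (m1 : hom (rL (Rs i)) S) (m2 : hom (rL (Rs j)) S)
    (H1 : cospan (inD S) (outD S)) C1 (c1 : hom (rK (Rs i)) C1) (k1 : hom C1 S)
    (h1 : hom C1 (apex H1)) (r1 : hom (rR (Rs i)) (apex H1)) (d1 : hom (coprod _ _) C1)
    (H2 : cospan (inD S) (outD S)) C2 (c2 : hom (rK (Rs j)) C2) (k2 : hom C2 S)
    (h2 : hom C2 (apex H2)) (r2 : hom (rR (Rs j)) (apex H2)) (d2 : hom (coprod _ _) C2) :=
  [/\ @derivation _ _ (Rs i) (ioCospan S) H1 m1 C1 c1 k1 h1 r1 d1,
      @derivation _ _ (Rs j) (ioCospan S) H2 m2 C2 c2 k2 h2 r2 d2,
      epi (copair m1 m2) &
      ~ ((exists u : hom (rL (Rs i)) C2, heq (hcomp u k2) m1) /\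
         (exists u : hom (rL (Rs j)) C1, heq (hcomp u k1) m2))].

Definition yields_cp (S : hyp) (i j : Idx)
    (m1 : hom (rL (Rs i)) S) (m2 : hom (rL (Rs j)) S) :=
  [/\ mono m1, mono m2, is_ma_cospan (inIncl S) (outIncl S) &
      exists H1 C1 c1 k1 h1 r1 d1 H2 C2 c2 k2 h2 r2 d2,
        @critical_pair S i j m1 m2 H1 C1 c1 k1 h1 r1 d1 H2 C2 c2 k2 h2 r2 d2].

Definition cp_joinable (S : hyp) (i j : Idx)
    (m1 : hom (rL (Rs i)) S) (m2 : hom (rL (Rs j)) S) :=
  forall H1 C1 c1 k1 h1 r1 d1 H2 C2 c2 k2 h2 r2 d2,
    @derivation _ _ (Rs i) (ioCospan S) H1 m1 C1 c1 k1 h1 r1 d1 ->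
    @derivation _ _ (Rs j) (ioCospan S) H2 m2 C2 c2 k2 h2 r2 d2 ->
    joinable H1 H2.
End System.

Definition hedge_gluing (L1 L2 : hyp) (M : {set hE L1 * hE L2}) :=
  [/\ M != set0,
      (forall p, p \in M -> lab p.1 = lab p.2) &
      (forall p q, p \in M -> q \in M -> (p.1 = q.1 \/ p.2 = q.2) -> p = q)].

(* Nodes of gamma: pairs (v,v') that are k-th sources (or k-th targets) of e, e'
   for some (e,e') in M. *)
Definition gamma_node (L1 L2 : hyp) (M : {set hE L1 * hE L2}) (vv : hV L1 * hV L2) :=
  exists2 p, p \in M &
    (vv \in zip (src p.1) (src p.2)) \/ (vv \in zip (tgt p.1) (tgt p.2)).

(* eps : L1 + L2 -> S is the coequaliser of p1^gamma;iota1 and p2^gamma;iota2. *)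
Definition hedge_coeq (L1 L2 S : hyp) (M : {set hE L1 * hE L2})
    (eps : hom (coprod L1 L2) S) :=
  coequaliser
    (fun x y : hV (coprod L1 L2) =>
       exists v v', [/\ x = inl v, y = inr v' & gamma_node M (v, v')])
    (fun x y : hE (coprod L1 L2) =>
       exists e e', [/\ x = inl e, y = inr e' & (e, e') \in M]) eps.

Definition node_gluing (L1 L2 S : hyp) (eps : hom (coprod L1 L2) S)
    (N : {set hV S * hV S}) :=
  let I1 x := indeg x = 0 /\ exists v, indeg v = 0 /\ hv eps (inl v) = x in
  let I2 x := indeg x = 0 /\ exists v, indeg v = 0 /\ hv eps (inr v) = x in
  let O1 x := outdeg x = 0 /\ exists v, outdeg v = 0 /\ hv eps (inl v) = x in
  let O2 x := outdeg x = 0 /\ exists v, outdeg v = 0 /\ hv eps (inr v) = x in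
  ((forall p, p \in N -> I1 p.1 /\ O2 p.2) \/ (forall p, p \in N -> I2 p.1 /\ O1 p.2)) /\
  (forall p q x, p \in N -> q \in N -> (x = p.1 \/ x = p.2) -> (x = q.1 \/ x = q.2) -> p = q).

(* eps' : S -> S' is the coequaliser of p1^gamma', p2^gamma' (gamma' discrete, nodes N). *)
Definition node_coeq (S S' : hyp) (N : {set hV S * hV S}) (eps' : hom S S') :=
  coequaliser (fun x y => (x, y) \in N) (fun _ _ => False) eps'.

End Hypergraphs.

Arguments yields_cp {Sg Idx} Rs {S} i j m1 m2.
Arguments cp_joinable {Sg Idx} Rs {S} i j m1 m2.

(* Main.v *)
Require Import Defs.
From mathcomp Require Import all_boot.
From Stdlib Require Import FunctionalExtensionality ProofIrrelevance.
Set Implicit Arguments. Unset Strict Implicit. Unset Printing Implicit Defensive.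

Section Gen.
Variable Sg : signature.
Local Notation hyp := (hyp Sg).

Lemma hom_ext (G H : hyp) (f g : hom G H) : hv f =1 hv g -> he f =1 he g -> f = g.
Proof.
case: f g => fv fe fs ft fl [gv ge gs gt gl] /= Hv He.
have ? := functional_extensionality _ _ Hv.
have ? := functional_extensionality _ _ He. subst.
have -> : fs = gs by apply: proof_irrelevance.
have -> : ft = gt by apply: proof_irrelevance.
by have -> : fl = gl by apply: proof_irrelevance.
Qed.

Lemma heqE (G H : hyp) (f g : hom G H) : heq f g -> f = g.
Proof. by case=> *; apply: hom_ext. Qed.

Lemma heqR (G H : hyp) (f : hom G H) : heq f f.
Proof. by []. Qed.

Lemma hcompA (G H K T : hyp) (f : hom G H) (g : hom H K) (k : hom K T) :
  hcomp (hcomp f g) k = hcomp f (hcomp g k).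
Proof. exact: hom_ext. Qed.
Lemma hcomp1h (G H : hyp) (f : hom G H) : hcomp (hid G) f = f.
Proof. exact: hom_ext. Qed.
Lemma hcomph1 (G H : hyp) (f : hom G H) : hcomp f (hid H) = f.
Proof. exact: hom_ext. Qed.

Definition iso (G H : hyp) (f : hom G H) :=
  exists g : hom H G, hcomp f g = hid G /\ hcomp g f = hid H.

Lemma pushoutE (A B C D : hyp) (f : hom A B) (g : hom A C) (f' : hom B D) (g' : hom C D) :
  pushout f g f' g' <->
  hcomp f f' = hcomp g g' /\
  forall (T : hyp) (h : hom B T) (k : hom C T), hcomp f h = hcomp g k ->
    exists u : hom D T, [/\ hcomp f' u = h, hcomp g' u = k &
      forall u' : hom D T, hcomp f' u' = h -> hcomp g' u' = k -> u' = u].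
Proof.
split.
- case=> /heqE E U; split=> // T h k hk.
  have [u [/heqE u1 /heqE u2 u3]] := U T h k (eq_ind _ (fun z => heq _ z) (heqR _) _ hk).
  by exists u; split=> // u' e1 e2; apply/heqE/u3; rewrite ?e1 ?e2.
- case=> E U; split; first by rewrite E.
  move=> T h k /heqE hk; have [u [u1 u2 u3]] := U T h k hk.
  by exists u; split; rewrite ?u1 ?u2 // => u' /heqE e1 /heqE e2; rewrite (u3 u' e1 e2).
Qed.

End Gen.

Section Gen2.
Variable Sg : signature.
Local Notation hyp := (hyp Sg).

Lemma dis_elim (K : hyp) : discrete K -> hE K -> False.
Proof. by move=> hK e; have := card0_eq hK e; rewrite inE. Qed.

Section NQuot.
Variables (G : hyp) (r : rel (hV G)).
Definition nqe : rel (hV G) := fun x y => r x y || r y x.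
Lemma nqe_sym : connect_sym nqe.
Proof. by apply: sym_connect_sym => x y; rewrite /nqe orbC. Qed.
Definition nqT := {x : hV G | root nqe x == x}.
Definition nqp (x : hV G) : nqT := exist _ (root nqe x) (introT eqP (root_root nqe_sym x)).
Definition nquot : hyp :=
  @Hyp Sg nqT (hE G) (fun e => map nqp (src e)) (fun e => map nqp (tgt e)) (@lab _ G)
   (fun e => etrans (size_map _ _) (src_ar e)) (fun e => etrans (size_map _ _) (tgt_ar e)).
Definition nq : hom G nquot :=
  @Hom Sg G nquot nqp id (fun e => erefl) (fun e => erefl) (fun e => erefl).

Lemma nqpE x y : (nqp x == nqp y) = connect nqe x y.
Proof. by rewrite -(root_connect nqe_sym) -val_eqE. Qed.
Lemma nqp_conn x y : connect nqe x y -> nqp x = nqp y.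
Proof. by move=> c; apply/eqP; rewrite nqpE. Qed.
Lemma nqpK (z : nqT) : nqp (val z) = z.
Proof. by apply: val_inj => /=; apply/eqP; case: z. Qed.
Lemma nq_rel x y : r x y -> hv nq x = hv nq y.
Proof. by move=> rxy; apply/eqP; rewrite nqpE connect1 // /nqe rxy. Qed.

Variables (T : hyp) (h : hom G T) (hr : forall x y, r x y -> hv h x = hv h y).
Lemma nq_conn x y : connect nqe x y -> hv h x = hv h y.
Proof.
case/connectP=> p; elim: p x => [|z p IH] x /=; first by move=> _ ->.
case/andP=> /orP [/hr|/hr/esym] -> /IH; exact.
Qed.
Lemma nqlift_src e : src (he h e) = map (fun z : nqT => hv h (val z)) (map nqp (src e)).
Proof.
rewrite hom_src -map_comp; apply: eq_map => x /=; apply: nq_conn.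
first [exact: connect_root | by rewrite nqe_sym connect_root].
Qed.
Lemma nqlift_tgt e : tgt (he h e) = map (fun z : nqT => hv h (val z)) (map nqp (tgt e)).
Proof.
rewrite hom_tgt -map_comp; apply: eq_map => x /=; apply: nq_conn.
first [exact: connect_root | by rewrite nqe_sym connect_root].
Qed.
Definition nqlift : hom nquot T :=
  @Hom Sg nquot T (fun z : nqT => hv h (val z)) (he h) nqlift_src nqlift_tgt (@hom_lab _ _ _ h).
Lemma nqliftK : hcomp nq nqlift = h.
Proof. by apply: hom_ext => x //=; apply: nq_conn; first [exact: connect_root | by rewrite nqe_sym connect_root]. Qed.
Lemma nqlift_uniq (u : hom nquot T) : hcomp nq u = h -> u = nqlift.
Proof.
move=> E; apply: hom_ext => [z|e] /=; last by rewrite -E.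
by rewrite -E /= nqpK.
Qed.
End NQuot.

Lemma nq_epi_eq (G T : hyp) (r : rel (hV G)) (u u' : hom (nquot r) T) :
  hcomp (nq r) u = hcomp (nq r) u' -> u = u'.
Proof.
move=> E; apply: hom_ext => [z|e].
  by rewrite -(nqpK z); move: (f_equal (fun f => hv f (val z)) E).
by move: (f_equal (fun f : hom G T => he f e) E).
Qed.

Lemma dhom_ext (G H : hyp) (f g : hom G H) : discrete G -> hv f =1 hv g -> f = g.
Proof. by move=> dG E; apply: hom_ext => // e; case: (dis_elim dG e). Qed.

Definition dhom (V : finType) (T : hyp) (f : V -> hV T) : hom (discrete_of Sg V) T :=
  @Hom Sg (discrete_of Sg V) T f (fun e => match e with end) (fun e => match e with end)
    (fun e => match e with end) (fun e => match e with end).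

Lemma discrete_of_dis (V : finType) : discrete (discrete_of Sg V).
Proof. by rewrite /discrete card_void. Qed.

Section DPushout.
Variables (K B C : hyp) (dK : discrete K) (f : hom K B) (g : hom K C).
Definition dpr : rel (hV (coprod B C)) :=
  fun a b => [exists k, (a == inl (hv f k)) && (b == inr (hv g k))].
Definition dP := nquot dpr.
Definition dPl : hom B dP := hcomp (iota1 B C) (nq dpr).
Definition dPr : hom C dP := hcomp (iota2 B C) (nq dpr).
Lemma dP_pushout : pushout f g dPl dPr.
Proof.
apply/pushoutE; split.
  apply: dhom_ext => // k /=; apply: (@nqp_conn (coprod B C) dpr); rewrite connect1 // /nqe; apply/orP; left.
  by apply/existsP; exists k; rewrite !eqxx.
move=> T h k E.
have hr : forall x y, dpr x y -> hv (copair h k) x = hv (copair h k) y.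
  move=> x y /existsP [z /andP [/eqP -> /eqP ->]] /=.
  by move: (f_equal (fun F => hv F z) E).
exists (nqlift hr); split.
- by rewrite /dPl hcompA nqliftK; apply: hom_ext.
- by rewrite /dPr hcompA nqliftK; apply: hom_ext.
- move=> u' e1 e2; apply: nqlift_uniq; apply: hom_ext => [[x|x]|[x|x]] /=;
  by rewrite -?e1 -?e2.
Qed.
End DPushout.

Section PO.
Variables (A B C : hyp) (f : hom A B) (g : hom A C).

Lemma pushout_uniq D D' (f1 : hom B D) (g1 : hom C D) (f2 : hom B D') (g2 : hom C D') :
  pushout f g f1 g1 -> pushout f g f2 g2 ->
  exists phi : hom D D', [/\ iso phi, hcomp f1 phi = f2 & hcomp g1 phi = g2].
Proof.
move=> /pushoutE [E1 U1] /pushoutE [E2 U2].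
have [u [u1 u2 u3]] := U1 _ _ _ E2.
have [v [v1 v2 v3]] := U2 _ _ _ E1.
exists u; split=> //; exists v; split.
- have [w [_ _ w3]] := U1 _ _ _ E1.
  rewrite (w3 (hid D)) ?hcomph1 // (w3 (hcomp u v)) // -hcompA ?u1 ?u2 //.
- have [w [_ _ w3]] := U2 _ _ _ E2.
  rewrite (w3 (hid D')) ?hcomph1 // (w3 (hcomp v u)) // -hcompA ?v1 ?v2 //.
Qed.

Lemma pushout_isoR D D' (f1 : hom B D) (g1 : hom C D) (phi : hom D D') :
  pushout f g f1 g1 -> iso phi -> pushout f g (hcomp f1 phi) (hcomp g1 phi).
Proof.
move=> /pushoutE [E U] [psi [p1 p2]]; apply/pushoutE; split.
  by rewrite -!hcompA E.
move=> T h k hk; have [u [u1 u2 u3]] := U _ _ _ hk.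
exists (hcomp psi u); split.
- by rewrite hcompA -(hcompA phi) p1 hcomp1h.
- by rewrite hcompA -(hcompA phi) p1 hcomp1h.
- move=> u' e1 e2; have -> : u' = hcomp psi (hcomp phi u').
    by rewrite -hcompA p2 hcomp1h.
  by rewrite (u3 (hcomp phi u')) // -hcompA.
Qed.
End PO.

Lemma pushout_spanR (A B C C' D : hyp) (f : hom A B) (g : hom A C) (psi : hom C C')
   (f' : hom B D) (g' : hom C' D) :
  iso psi -> pushout f (hcomp g psi) f' g' -> pushout f g f' (hcomp psi g').
Proof.
move=> [chi [c1 c2]] /pushoutE [E U]; apply/pushoutE; split; first by rewrite E hcompA.
move=> T h k hk.
have hk' : hcomp f h = hcomp (hcomp g psi) (hcomp chi k).
  by rewrite hk hcompA -(hcompA psi) c1 hcomp1h.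
have [u [u1 u2 u3]] := U _ _ _ hk'.
exists u; split=> //.
- by rewrite hcompA u2 -hcompA c1 hcomp1h.
- move=> u' e1 e2; apply: u3 => //; by rewrite -e2 -!hcompA c2 hcomp1h.
Qed.

Lemma iso_comp (G H K : hyp) (f : hom G H) (g : hom H K) : iso f -> iso g -> iso (hcomp f g).
Proof.
move=> [f' [f1 f2]] [g' [g1 g2]]; exists (hcomp g' f'); split.
- by rewrite hcompA -(hcompA g) g1 hcomp1h.
- by rewrite hcompA -(hcompA f') f2 hcomp1h.
Qed.
Lemma iso_id (G : hyp) : iso (hid G).
Proof. by exists (hid G); rewrite hcomp1h. Qed.

End Gen2.

Section Paths.
Variable Sg : signature.
Local Notation hyp := (hyp Sg).

Definition estep (G : hyp) : rel (hV G) := fun a b => [exists e, (a \in src e) && (b \in tgt e)].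
Definition reach1 (G : hyp) (a b : hV G) := [exists t, estep a t && connect (@estep G) t b].

Lemma estepP (G : hyp) (a b : hV G) : reflect (exists e, a \in src e /\ b \in tgt e) (estep a b).
Proof.
apply: (iffP existsP) => [[e /andP [? ?]]|[e [? ?]]]; exists e => //; exact/andP.
Qed.

Lemma reach1_conn (G : hyp) (a b : hV G) : reach1 a b -> connect (@estep G) a b.
Proof. by case/existsP=> t /andP [s c]; apply: connect_trans c; apply: connect1. Qed.

Lemma reach1_trans (G : hyp) (a b c : hV G) : reach1 a b -> connect (@estep G) b c -> reach1 a c.
Proof.
case/existsP=> t /andP [s c1] c2; apply/existsP; exists t; rewrite s /=.
exact: connect_trans c2.
Qed.
Lemma reach1_transl (G : hyp) (a b c : hV G) : connect (@estep G) a b -> reach1 b c -> reach1 a c.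
Proof.
case/connectP=> s; elim: s a => [|x s IH] a /=; first by move=> _ ->.
case/andP=> ax px Eb r; have := IH x px Eb r.
move/reach1_conn => cxc; apply/existsP; exists x; by rewrite ax.
Qed.
Lemma estep_reach1 (G : hyp) (a b : hV G) : estep a b -> reach1 a b.
Proof. by move=> s; apply/existsP; exists b; rewrite s connect0. Qed.

Lemma path_reach1 (G : hyp) (a b : hV G) p : path_from a b p -> reach1 a b.
Proof.
elim: p a => [|e1 p IH] a //= /and3P [pth sa tb].
case: p IH pth tb => [|e2 p] IH pth tb.
  by apply: estep_reach1; apply/estepP; exists e1.
move: pth => /= /andP [/hasP [t t1 t2] pth].
have r : reach1 t b by apply: IH; rewrite /= pth t2.
apply: reach1_transl r; apply: connect1; apply/estepP; by exists e1.
Qed.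

Lemma reach1_path (G : hyp) (a b : hV G) : reach1 a b -> exists p, path_from a b p.
Proof.
case/existsP=> t /andP [/estepP [e [sa tt]] /connectP [s]].
elim: s a t e sa tt => [|x s IH] a t e sa tt /=; first by move=> _ ->; exists [:: e]; rewrite /= sa tt.
case/andP=> /estepP [e' [s' t']] pth Eb.
have [[|e1 q] //= ] := IH t x e' s' t' pth Eb.
case/and3P=> pq st tb; exists (e :: e1 :: q); rewrite /= pq sa tb !andbT /=.
by apply/hasP; exists t.
Qed.

Lemma cycle_reach1 (G : hyp) : (exists p : seq (hE G), is_cycle p) <-> exists a : hV G, reach1 a a.
Proof.
split.
  case=> [[|e1 p]] //= /andP [pth /hasP [t tl ts]]; exists t; apply: (@path_reach1 _ _ _ (e1 :: p)).
  by rewrite /= pth ts tl.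
case=> a /reach1_path [[|e1 p]] //= /and3P [pth sa ta]; exists (e1 :: p).
by rewrite /= pth; apply/hasP; exists a.
Qed.

Lemma ma_acyclic (G : hyp) (a : hV G) : ma G -> ~~ reach1 a a.
Proof. by case=> nc _; apply/negP => r; apply: nc; apply/cycle_reach1; exists a. Qed.

Lemma hom_estep (G H : hyp) (f : hom G H) a b : estep a b -> estep (hv f a) (hv f b).
Proof.
case/estepP=> e [sa tb]; apply/estepP; exists (he f e).
by rewrite hom_src hom_tgt !map_f.
Qed.
Lemma hom_conn (G H : hyp) (f : hom G H) a b :
  connect (@estep G) a b -> connect (@estep H) (hv f a) (hv f b).
Proof.
case/connectP=> s; elim: s a => [|x s IH] a /=; first by move=> _ ->.
case/andP=> ax px Eb; apply: connect_trans (IH _ px Eb); apply: connect1; exact: hom_estep.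
Qed.
Lemma hom_reach1 (G H : hyp) (f : hom G H) a b : reach1 a b -> reach1 (hv f a) (hv f b).
Proof.
case/existsP=> t /andP [s c]; apply/existsP; exists (hv f t).
by rewrite hom_estep //= hom_conn.
Qed.

Lemma indeg0P (G : hyp) (v : hV G) : reflect (forall e, v \notin tgt e) (indeg v == 0).
Proof.
rewrite /indeg sum_nat_eq0; apply: (iffP forallP) => H e.
  by move: (H e) => /= /eqP /count_memPn.
by apply/eqP/count_memPn; apply: H.
Qed.
Lemma outdeg0P (G : hyp) (v : hV G) : reflect (forall e, v \notin src e) (outdeg v == 0).
Proof.
rewrite /outdeg sum_nat_eq0; apply: (iffP forallP) => H e.
  by move: (H e) => /= /eqP /count_memPn.
by apply/eqP/count_memPn; apply: H.
Qed.


Lemma indeg_le1 (G : hyp) (v : hV G) e1 e2 :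
  indeg v <= 1 -> v \in tgt e1 -> v \in tgt e2 -> e1 = e2.
Proof.
move=> le t1 t2; apply/eqP/negPn/negP => ne.
have : count_mem v (tgt e1) + count_mem v (tgt e2) <= indeg v.
  rewrite /indeg (bigD1 e1) //= (bigD1 e2) /=; last by rewrite eq_sym ne.
  by rewrite addnA leq_addr.
move: t1 t2; rewrite -!has_pred1 !has_count => c1 c2 c.
have := leq_trans c le; rewrite -(leq_add2r (count_mem v (tgt e2))) => _.
by move: c1 c2 (leq_trans c le); case: (count_mem v (tgt e1)) => // n; case: (count_mem v (tgt e2)) => // m; rewrite addSn addnS.
Qed.
Lemma outdeg_le1 (G : hyp) (v : hV G) e1 e2 :
  outdeg v <= 1 -> v \in src e1 -> v \in src e2 -> e1 = e2.
Proof.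
move=> le t1 t2; apply/eqP/negPn/negP => ne.
have : count_mem v (src e1) + count_mem v (src e2) <= outdeg v.
  rewrite /outdeg (bigD1 e1) //= (bigD1 e2) /=; last by rewrite eq_sym ne.
  by rewrite addnA leq_addr.
move: t1 t2; rewrite -!has_pred1 !has_count => c1 c2 c.
by move: c1 c2 (leq_trans c le); case: (count_mem v (src e1)) => // n; case: (count_mem v (src e2)) => // m; rewrite addSn addnS.
Qed.

Section Convex.
Variables (L G : hyp) (mu : hom L G) (mmu : mono mu) (maG : ma G).
Definition imgE (e : hE G) := [exists x, he mu x == e].

Lemma out_of_img a e : hv mu a \in src e -> ~~ imgE e -> outdeg a == 0.
Proof.
move=> ae ne; apply/outdeg0P => e0; apply/negP => a0.
have : he mu e0 = e.
  apply: (outdeg_le1 (maG.2 (hv mu a)).2) ae.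
  by rewrite hom_src map_f.
by move=> E; move/negP: ne; apply; apply/existsP; exists e0; rewrite E.
Qed.
Lemma into_img b e : hv mu b \in tgt e -> ~~ imgE e -> indeg b == 0.
Proof.
move=> ae ne; apply/indeg0P => e0; apply/negP => a0.
have : he mu e0 = e.
  apply: (indeg_le1 (maG.2 (hv mu b)).1) ae.
  by rewrite hom_tgt map_f.
by move=> E; move/negP: ne; apply; apply/existsP; exists e0; rewrite E.
Qed.

Lemma img_src x t : t \in src (he mu x) -> exists y, hv mu y = t.
Proof. by rewrite hom_src => /mapP [y _ ->]; exists y. Qed.
Lemma img_tgt x t : t \in tgt (he mu x) -> exists y, hv mu y = t.
Proof. by rewrite hom_tgt => /mapP [y _ ->]; exists y. Qed.

Lemma first_out p v w : path_from v w p -> (exists a, hv mu a = v) -> has (predC imgE) p ->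
  exists a q, [/\ outdeg a == 0, path_from (hv mu a) w q & has (predC imgE) q].
Proof.
elim: p v => [|e1 p IH] v //= /and3P [pth sv tw] [a0 Ea0] /orP [ne|hp].
  exists a0, (e1 :: p); rewrite /= ?pth -?Ea0 ?sv ?tw ?ne //=; split=> //.
    by apply: (out_of_img (e := e1)); rewrite ?Ea0.
  by rewrite Ea0 sv.
case: p IH pth tw hp => [|e2 p] // IH /= /andP [/hasP [t t1 t2] pth] tw hp.
case: (boolP (imgE e1)) => [/existsP [x /eqP Ex]|ne].
  apply: (IH t) => //; first by rewrite /= pth t2.
  by apply: (@img_tgt x); rewrite Ex.
exists a0, [:: e1, e2 & p]; rewrite /= Ea0 sv pth tw /= ne; split=> //.
  by apply: (out_of_img (e := e1)); rewrite ?Ea0.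
by rewrite !andbT; apply/hasP; exists t.
Qed.

Lemma last_in p u w : path_from u w p -> (exists b, hv mu b = w) -> has (predC imgE) p ->
  exists b q, indeg b == 0 /\ path_from u (hv mu b) q.
Proof.
elim: p u => [|e1 p IH] u //= /and3P [pth su tw] [b0 Eb0].
case: p IH pth tw => [|e2 p] IH pth tw /=.
  rewrite orbF => ne; exists b0, [:: e1]; rewrite /= su Eb0 tw; split=> //.
  by apply: (into_img (e := e1)); rewrite ?Eb0.
move: pth => /= /andP [/hasP [t t1 t2] pth] hp.
case: (boolP (has (predC imgE) (e2 :: p))) => hp'.
  have [b [[|f1 q] [ib]]] := IH t (introT and3P (And3 pth t2 tw)) (ex_intro _ b0 Eb0) hp' => //.
  case/and3P=> pq tf bq; exists b, [:: e1, f1 & q]; rewrite /= su pq bq /= !andbT; split=> //.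
  by apply/hasP; exists t.
have ne : ~~ imgE e1 by move: hp hp' => /=; case: (imgE e1); rewrite /= ?orbF => // ->.
move: hp' => /= /norP [/negbNE /existsP [x /eqP Ex] _].
have [b Eb] : exists b, hv mu b = t by apply: (@img_src x); rewrite Ex.
exists b, [:: e1]; rewrite /= su Eb t1; split=> //.
by apply: (into_img (e := e1)); rewrite ?Eb.
Qed.

Lemma mono_convex : strongly_connected L -> convex_match mu.
Proof.
move=> sc; split=> // v v' p [a0 Ea0] [b0 Eb0] pth e ep.
case: (boolP (imgE e)) => [/existsP [x /eqP Ex]|ne]; first by exists x.
have hp : has (predC imgE) p by apply/hasP; exists e.
have [a [q [oa pq hq]]] := first_out pth (ex_intro _ a0 Ea0) hp.
have [b [q' [ib pq']]] := last_in pq (ex_intro _ b0 Eb0) hq.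
have [r pr] := sc b a (eqP ib) (eqP oa).
have r1 := hom_reach1 mu (path_reach1 pr).
have r2 := path_reach1 pq'.
by have := ma_acyclic (hv mu a) maG; rewrite (reach1_trans r2 (reach1_conn r1)).
Qed.
End Convex.

End Paths.

Section Iso.
Variable Sg : signature.
Local Notation hyp := (hyp Sg).

Lemma copair_comp (G H K T : hyp) (f : hom G K) (g : hom H K) (h : hom K T) :
  hcomp (copair f g) h = copair (hcomp f h) (hcomp g h).
Proof. by apply: hom_ext => [[x|x]|[x|x]]. Qed.

Lemma mono_comp (G H K : hyp) (f : hom G H) (g : hom H K) : mono f -> mono g -> mono (hcomp f g).
Proof. by move=> [f1 f2] [g1 g2]; split; apply: inj_comp. Qed.

Lemma mono_compl (G H K : hyp) (f : hom G H) (g : hom H K) : mono (hcomp f g) -> mono f.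
Proof. by move=> [h1 h2]; split => x y E; [apply: h1; rewrite /= E | apply: h2; rewrite /= E]. Qed.

Section IsoF.
Variables (G H : hyp) (phi : hom G H) (ip : iso phi).
Lemma iso_bijv : bijective (hv phi).
Proof.
case: ip => psi [p1 p2]; exists (hv psi) => x.
  by move: (f_equal (fun f => hv f x) p1).
by move: (f_equal (fun f => hv f x) p2).
Qed.
Lemma iso_bije : bijective (he phi).
Proof.
case: ip => psi [p1 p2]; exists (he psi) => x.
  by move: (f_equal (fun f => he f x) p1).
by move: (f_equal (fun f => he f x) p2).
Qed.
Lemma iso_mono : mono phi.
Proof. by split; apply: bij_inj; [apply: iso_bijv | apply: iso_bije]. Qed.

Lemma indeg_iso v : indeg (hv phi v) = indeg v.
Proof.
rewrite /indeg (reindex (he phi)) /=; last by apply: onW_bij; apply: iso_bije.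
apply: eq_bigr => e _; rewrite hom_tgt count_map; apply: eq_count => x /=.
by rewrite inj_eq //; apply: bij_inj; apply: iso_bijv.
Qed.
Lemma outdeg_iso v : outdeg (hv phi v) = outdeg v.
Proof.
rewrite /outdeg (reindex (he phi)) /=; last by apply: onW_bij; apply: iso_bije.
apply: eq_bigr => e _; rewrite hom_src count_map; apply: eq_count => x /=.
by rewrite inj_eq //; apply: bij_inj; apply: iso_bijv.
Qed.

Lemma ma_iso : ma G -> ma H.
Proof.
case: ip => psi [p1 p2] [nc dg]; split.
  case/cycle_reach1=> a /(hom_reach1 psi) r; apply: nc; apply/cycle_reach1; by exists (hv psi a).
move=> v; have [w <-] : exists w, hv phi w = v.
  by exists (hv psi v); move: (f_equal (fun f => hv f v) p2).
by rewrite indeg_iso outdeg_iso.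
Qed.

Lemma ma_cospan_iso (I O : hyp) (i : hom I G) (o : hom O G) :
  is_ma_cospan i o -> is_ma_cospan (hcomp i phi) (hcomp o phi).
Proof.
case=> dis m [mi mo] hi ho; have [bv bv'] := (iso_bijv, iso_mono).
case: bv => pv pK Kp.
split=> //; first exact: ma_iso.
  by split; apply: mono_comp.
  move=> v; rewrite -(Kp v) indeg_iso; split.
    by move/hi=> [x <-]; exists x.
  case=> x /= E; apply/hi; exists x; apply: (bij_inj iso_bijv); by rewrite E Kp.
move=> v; rewrite -(Kp v) outdeg_iso; split.
  by move/ho=> [x <-]; exists x.
case=> x /= E; apply/ho; exists x; apply: (bij_inj iso_bijv); by rewrite E Kp.
Qed.
End IsoF.

Lemma iso_inv (G H : hyp) (phi : hom G H) (psi : hom H G) :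
  hcomp phi psi = hid G -> hcomp psi phi = hid H -> iso psi.
Proof. by move=> p1 p2; exists phi. Qed.

End Iso.

Section CIso.
Variable Sg : signature.
Local Notation hyp := (hyp Sg).

Lemma cospan_iso_refl (n m : hyp) (G : cospan n m) : cospan_iso G G.
Proof. by exists (hid _), (hid _); split; split. Qed.
Lemma cospan_iso_sym (n m : hyp) (G H : cospan n m) : cospan_iso G H -> cospan_iso H G.
Proof.
case=> phi [psi [p1 p2 /heqE i1 /heqE o1]]; exists psi, phi; split=> //.
  by rewrite -i1 hcompA (heqE p1) hcomph1.
by rewrite -o1 hcompA (heqE p1) hcomph1.
Qed.
Lemma cospan_iso_trans (n m : hyp) (G H K : cospan n m) :
  cospan_iso G H -> cospan_iso H K -> cospan_iso G K.
Proof.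
case=> phi [psi [/heqE p1 /heqE p2 /heqE i1 /heqE o1]].
case=> phi' [psi' [/heqE p1' /heqE p2' /heqE i1' /heqE o1']].
exists (hcomp phi phi'), (hcomp psi' psi); split.
- by rewrite hcompA -(hcompA phi') p1' hcomp1h p1.
- by rewrite hcompA -(hcompA psi) p2 hcomp1h p2'.
- by rewrite -hcompA i1 i1'.
- by rewrite -hcompA o1 o1'.
Qed.

Lemma derivation_isoL (n m : hyp) (r : rule Sg) (G G' H : cospan n m) mu C c k h rr d
  (phi : hom (apex G') (apex G)) (psi : hom (apex G) (apex G')) :
  left_connected_rule r -> hcomp phi psi = hid _ -> hcomp psi phi = hid _ ->
  hcomp (cin G') phi = cin G -> hcomp (cout G') phi = cout G ->
  @derivation Sg n m r G H mu C c k h rr d ->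
  @derivation Sg n m r G' H (hcomp mu psi) C c (hcomp k psi) h rr d.
Proof.
move=> [_ _ _ scL] p1 p2 ei eo [[mG mH] [mmu _] po1 po2 [/heqE dk dh]].
have ip : iso psi by exists phi.
have eG : is_ma_cospan (cin G') (cout G').
  have := ma_cospan_iso ip mG; rewrite -ei -eo !hcompA p1 !hcomph1; exact.
split=> //.
- apply: mono_convex => //; last by case: eG.
  by apply: mono_comp => //; apply: iso_mono.
- by apply: pushout_isoR.
- split=> //; rewrite -hcompA dk copair_comp -ei -eo !hcompA p1 !hcomph1.
  exact: heqR.
Qed.

Section Sys.
Variables (Idx : finType) (Rs : Idx -> rule Sg) (HR : forall i, left_connected_rule (Rs i)).

Lemma step_isoL (n m : hyp) (G G' H : cospan n m) :
  cospan_iso G' G -> step Rs G H -> step Rs G' H.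
Proof.
case=> phi [psi [/heqE p1 /heqE p2 /heqE i1 /heqE o1]].
case=> i [mu [C [c [k [h [rr [d D]]]]]]].
exists i, (hcomp mu psi), C, c, (hcomp k psi), h, rr, d.
exact: (derivation_isoL (HR i) p1 p2 i1 o1 D).
Qed.

Lemma rewrites_isoL (n m : hyp) (G G' W : cospan n m) :
  cospan_iso G' G -> rewrites Rs G W -> exists W', rewrites Rs G' W' /\ cospan_iso W' W.
Proof.
move=> I R; case: R I => [G0|G0 H K s R] I.
  by exists G'; split=> //; apply: rw_refl.
exists K; split; last exact: cospan_iso_refl.
apply: rw_step R; exact: step_isoL s.
Qed.

Lemma joinable_iso (n m : hyp) (H1 H2 H1' H2' : cospan n m) :
  cospan_iso H1' H1 -> cospan_iso H2' H2 -> joinable Rs H1 H2 -> joinable Rs H1' H2'.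
Proof.
move=> I1 I2 [W1 [W2 [R1 R2 I]]].
have [W1' [R1' J1]] := rewrites_isoL I1 R1.
have [W2' [R2' J2]] := rewrites_isoL I2 R2.
exists W1', W2'; split=> //.
apply: cospan_iso_trans J1 (cospan_iso_trans I (cospan_iso_sym J2)).
Qed.
End Sys.
End CIso.

Section PD.
Variable Sg : signature.
Local Notation hyp := (hyp Sg).
Variables (K B C D : hyp) (dK : discrete K) (f : hom K B) (g : hom K C)
  (f' : hom B D) (g' : hom C D) (po : pushout f g f' g') (gm : injective (hv g)).

Definition side k (a : (hV B + hV C)%type) := (a == inl (hv f k)) || (a == inr (hv g k)).

Lemma sideP k a : side k a -> a = inl (hv f k) \/ a = inr (hv g k).
Proof. by case/orP=> /eqP ->; [left|right]. Qed.

Lemma nqe_dprP a x : nqe (dpr f g) a x ->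
  exists k, (a = inl (hv f k) /\ x = inr (hv g k)) \/ (x = inl (hv f k) /\ a = inr (hv g k)).
Proof.
rewrite /nqe /dpr; case/orP => /existsP [k /andP [/eqP E1 /eqP E2]]; exists k; by [left|right].
Qed.

Lemma dQ a b : connect (nqe (dpr f g)) a b ->
  a = b \/ exists k1 k2, [/\ side k1 a, side k2 b & hv f k1 = hv f k2].
Proof.
case/connectP=> p; elim: p a => [|x p IH] a /=; first by move=> _ ->; left.
case/andP=> /nqe_dprP [k Hk] px Eb; right; case: (IH x px Eb) => [Ex|[k1 [k2 [s1 s2 E]]]].
  subst x; exists k, k; by case: Hk => [[-> ->]|[-> ->]]; rewrite /side !eqxx ?orbT.
exists k, k2; split=> //.
- by case: Hk => [[-> _]|[_ ->]]; rewrite /side eqxx ?orbT.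
- case: Hk => [[_ Ex]|[Ex _]]; case/sideP: s1; rewrite Ex => //.
    by case=> /gm ->.
  by case=> ->.
Qed.

Let phiP : exists phi : hom (dP f g) D, [/\ iso phi, hcomp (dPl f g) phi = f' & hcomp (dPr f g) phi = g'].
Proof. exact: pushout_uniq (dP_pushout dK f g) po. Qed.

Lemma pd_nodes : forall x y : (hV B + hV C)%type,
  copair_v f' g' x = copair_v f' g' y -> connect (nqe (dpr f g)) x y.
Proof.
have [phi [ip E1 E2]] := phiP.
have Hc : forall z, copair_v f' g' z = hv phi (nqp (dpr f g) z).
  by case=> z; rewrite -?E1 -?E2.
move=> x y; rewrite !Hc => /(bij_inj (iso_bijv ip)) /eqP.
by rewrite (nqpE (dpr f g)).
Qed.

Lemma pd_gg c1 c2 : hv g' c1 = hv g' c2 ->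
  c1 = c2 \/ exists k1 k2, [/\ c1 = hv g k1, c2 = hv g k2 & hv f k1 = hv f k2].
Proof.
move=> E; case: (dQ (pd_nodes (x := inr c1) (y := inr c2) E)) => [[->]|[k1 [k2 [s1 s2 Ek]]]]; first by left.
right; exists k1, k2; by case/sideP: s1 => [//|[->]]; case/sideP: s2 => [//|[->]].
Qed.

Lemma pd_gf c b : hv g' c = hv f' b -> exists k, c = hv g k /\ b = hv f k.
Proof.
move=> E; case: (dQ (pd_nodes (x := inr c) (y := inl b) E)) => [//|[k1 [k2 [s1 s2 Ek]]]].
exists k1; by case/sideP: s1 => [//|[->]]; case/sideP: s2 => [[->]|//].
Qed.

Lemma pd_finj : injective (hv f').
Proof.
move=> b1 b2 E; case: (dQ (pd_nodes (x := inl b1) (y := inl b2) E)) => [[->]//|[k1 [k2 [s1 s2 Ek]]]].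
by move: s1 s2; rewrite /side /= => /orP [] /eqP // [->] /orP [] /eqP // [->].
Qed.

Lemma pd_edges_disj e1 e2 : he f' e1 <> he g' e2.
Proof.
have [phi [ip <- <-]] := phiP; move=> /= /(bij_inj (iso_bije ip)); discriminate.
Qed.
Lemma pd_finj_e : injective (he f').
Proof. by have [phi [ip <- _]] := phiP; move=> e1 e2 /= /(bij_inj (iso_bije ip)) [->]. Qed.
Lemma pd_ginj_e : injective (he g').
Proof. by have [phi [ip _ <-]] := phiP; move=> e1 e2 /= /(bij_inj (iso_bije ip)) [->]. Qed.

Lemma pd_cover_v z : (exists b, hv f' b = z) \/ (exists c, hv g' c = z).
Proof.
have [phi [ip E1 E2]] := phiP; have [psi pK Kp] := iso_bijv ip.
rewrite -(Kp z); set w := psi z; rewrite -(nqpK w).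
case: (val w) => [b|c]; [left; exists b | right; exists c]; by rewrite -?E1 -?E2.
Qed.
Lemma pd_cover_e e : (exists b, he f' b = e) \/ (exists c, he g' c = e).
Proof.
have [phi [ip E1 E2]] := phiP; have [psi pK Kp] := iso_bije ip.
rewrite -(Kp e); case: (psi e) => [b|c]; [left; exists b | right; exists c]; by rewrite -?E1 -?E2.
Qed.
End PD.

Section Der.
Variable Sg : signature.
Local Notation hyp := (hyp Sg).

Lemma factor_mono (A B G : hyp) (f : hom A G) (g : hom B G) : mono g ->
  (forall x, exists y, hv g y = hv f x) -> (forall e, exists e', he g e' = he f e) ->
  exists u : hom A B, hcomp u g = f.
Proof.
move=> [gv ge] Hv He.
have Hv' : forall x, exists y, hv g y == hv f x by move=> x; have [y Ey] := Hv x; exists y; rewrite Ey.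
have He' : forall e, exists y, he g y == he f e by move=> x; have [y Ey] := He x; exists y; rewrite Ey.
pose uv x := xchoose (Hv' x); pose ue e := xchoose (He' e).
have uvE x : hv g (uv x) = hv f x by apply/eqP; apply: (xchooseP (Hv' x)).
have ueE x : he g (ue x) = he f x by apply/eqP; apply: (xchooseP (He' x)).
have s_ok e : src (ue e) = map uv (src e).
  apply: (inj_map gv); rewrite -hom_src ueE hom_src -map_comp; apply: eq_map => y /=.
  by rewrite uvE.
have t_ok e : tgt (ue e) = map uv (tgt e).
  apply: (inj_map gv); rewrite -hom_tgt ueE hom_tgt -map_comp; apply: eq_map => y /=.
  by rewrite uvE.
have l_ok e : lab (ue e) = lab e by rewrite -(hom_lab g) ueE hom_lab.
by exists (Hom s_ok t_ok l_ok); apply: hom_ext => x /=.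
Qed.

Lemma mono_cancel (A B G : hyp) (u u' : hom A B) (g : hom B G) :
  mono g -> hcomp u g = hcomp u' g -> u = u'.
Proof.
move=> [gv ge] E; apply: hom_ext => x.
  by apply: gv; move: (f_equal (fun F => hv F x) E).
by apply: ge; move: (f_equal (fun F => he F x) E).
Qed.

Lemma rK_dis (r : rule Sg) : left_connected_rule r -> discrete (rK r).
Proof.
case=> [[[dI dO] _ _ _ _] _ _ _]; rewrite /discrete /rK /= card_sum.
by move: dI dO; rewrite /discrete => -> ->.
Qed.

Lemma der_c_mono (n m : hyp) (r : rule Sg) (G H : cospan n m) mu C c k h rr d :
  left_connected_rule r -> @derivation Sg n m r G H mu C c k h rr d -> mono c.
Proof.
move=> [_ _ mL _] [_ [mmu _] [/heqE E _] _ _].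
apply: (@mono_compl _ _ _ _ _ k); rewrite -E; exact: mono_comp.
Qed.

Lemma derivation_uniq (n m : hyp) (r : rule Sg) (G H1 H2 : cospan n m) mu
   C1 c1 k1 h1 rr1 d1 C2 c2 k2 h2 rr2 d2 :
  left_connected_rule r ->
  @derivation Sg n m r G H1 mu C1 c1 k1 h1 rr1 d1 ->
  @derivation Sg n m r G H2 mu C2 c2 k2 h2 rr2 d2 -> cospan_iso H1 H2.
Proof.
move=> lc D1 D2; have dK := rK_dis lc.
have [c1v c1e] := der_c_mono lc D1; have [c2v c2e] := der_c_mono lc D2.
case: (lc) => _ _ [mLv mLe] _.
case: D1 => _ [[muv mue] _] sq1 sqR1 [/heqE dk1 /heqE dh1].
case: D2 => _ _ sq2 sqR2 [/heqE dk2 /heqE dh2].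
have E1 := (proj1 (pushoutE _ _ _ _) sq1).1.
have E2 := (proj1 (pushoutE _ _ _ _) sq2).1.
have k1m : mono k1.
  split; last exact: (pd_ginj_e dK sq1).
  move=> x y /(pd_gg dK sq1 c1v) [//|[q1 [q2 [-> -> /mLv ->]]]] //.
have k2m : mono k2.
  split; last exact: (pd_ginj_e dK sq2).
  move=> x y /(pd_gg dK sq2 c2v) [//|[q1 [q2 [-> -> /mLv ->]]]] //.
have cov : forall (Ca Cb : hyp) (ca : hom (rK r) Ca) (cb : hom (rK r) Cb) ka kb,
    injective (hv ca) -> injective (hv cb) ->
    pushout (copair (iL r) (oL r)) ca mu ka -> pushout (copair (iL r) (oL r)) cb mu kb ->
    exists u : hom Ca Cb, hcomp u kb = ka.
  move=> Ca Cb ca cb ka kb cav cbv sa sb.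
  have Eb := (proj1 (pushoutE _ _ _ _) sb).1.
  apply: factor_mono.
  - split; last exact: (pd_ginj_e dK sb).
    move=> x y /(pd_gg dK sb cbv) [//|[q1 [q2 [-> -> /mLv ->]]]] //.
  - move=> x; case: (pd_cover_v dK sb (hv ka x)) => [[l El]|//].
    have [q [Ex El2]] := pd_gf dK sa cav (esym El); rewrite Ex.
    exists (hv cb q); move: (f_equal (fun F => hv F q) Eb) => /= <-.
    by move: (f_equal (fun F => hv F q) (proj1 (pushoutE _ _ _ _) sa).1) => /= ->.
  - move=> e; case: (pd_cover_e dK sb (he ka e)) => [[l El]|//].
    by case: (pd_edges_disj dK sa El).
have [psi Epsi] := cov _ _ _ _ _ _ c1v c2v sq1 sq2.
have [chi Echi] := cov _ _ _ _ _ _ c2v c1v sq2 sq1.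
have ipsi : iso psi.
  exists chi; split.
  - by apply: (mono_cancel k1m); rewrite hcompA Echi Epsi hcomp1h.
  - by apply: (mono_cancel k2m); rewrite hcompA Epsi Echi hcomp1h.
have Ec : hcomp c1 psi = c2.
  by apply: (mono_cancel k2m); rewrite hcompA Epsi -E1 E2.
have Ed : hcomp d1 psi = d2.
  by apply: (mono_cancel k2m); rewrite hcompA Epsi dk1 dk2.
have sqR2' : pushout (copair (iR r) (oR r)) c1 rr2 (hcomp psi h2).
  by apply: pushout_spanR => //; rewrite Ec.
have [phi [[phi' [p1 p2]] Er Eh]] := pushout_uniq sqR1 sqR2'.
exists phi, phi'; rewrite p1 p2; split; try exact: heqR.
- have -> : cin H1 = hcomp (iota1 n m) (hcomp d1 h1) by rewrite dh1; apply: hom_ext.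
  have -> : cin H2 = hcomp (iota1 n m) (hcomp d2 h2) by rewrite dh2; apply: hom_ext.
  by rewrite !hcompA Eh -Ed !hcompA; exact: heqR.
- have -> : cout H1 = hcomp (iota2 n m) (hcomp d1 h1) by rewrite dh1; apply: hom_ext.
  have -> : cout H2 = hcomp (iota2 n m) (hcomp d2 h2) by rewrite dh2; apply: hom_ext.
  by rewrite !hcompA Eh -Ed !hcompA; exact: heqR.
Qed.
End Der.

Section Reach.
Variable Sg : signature.
Local Notation hyp := (hyp Sg).

Lemma outdeg0_hom (G H : hyp) (f : hom G H) v : outdeg (hv f v) == 0 -> outdeg v == 0.
Proof.
move/outdeg0P=> H0; apply/outdeg0P => e; apply/negP => ve.
by move: (H0 (he f e)); rewrite hom_src map_f.
Qed.
Lemma indeg0_hom (G H : hyp) (f : hom G H) v : indeg (hv f v) == 0 -> indeg v == 0.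
Proof.
move/indeg0P=> H0; apply/indeg0P => e; apply/negP => ve.
by move: (H0 (he f e)); rewrite hom_tgt map_f.
Qed.

Lemma src_map (G H : hyp) (f : hom G H) e z : z \in src (he f e) -> exists2 a, a \in src e & hv f a = z.
Proof. by rewrite hom_src => /mapP [a ? ->]; exists a. Qed.
Lemma tgt_map (G H : hyp) (f : hom G H) e z : z \in tgt (he f e) -> exists2 a, a \in tgt e & hv f a = z.
Proof. by rewrite hom_tgt => /mapP [a ? ->]; exists a. Qed.

Section RuleFacts.
Variable r : rule Sg.
Hypothesis lc : left_connected_rule r.

Lemma iL_in ki : indeg (hv (iL r) ki) == 0.
Proof. by case: lc => [[_ _ _ hi _] _ _ _]; apply/eqP/hi; exists ki. Qed.
Lemma oL_out ko : outdeg (hv (oL r) ko) == 0.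
Proof. by case: lc => [[_ _ _ _ ho] _ _ _]; apply/eqP/ho; exists ko. Qed.
Lemma oR_out ko : outdeg (hv (oR r) ko) == 0.
Proof. by case: lc => [_ [_ _ _ _ ho] _ _]; apply/eqP/ho; exists ko. Qed.

Lemma L_conn ki ko : connect (@estep _ (rL r)) (hv (iL r) ki) (hv (oL r) ko).
Proof.
case: lc => _ _ _ sc; have [p P] := sc _ _ (eqP (iL_in ki)) (eqP (oL_out ko)).
exact: reach1_conn (path_reach1 P).
Qed.

Lemma L_out0 (q : hV (rK r)) : outdeg (hv (copair (iL r) (oL r)) q) == 0 -> exists ko, q = inr ko.
Proof.
case: q => [ki|ko] /= o; last by exists ko.
case: lc => [[_ [nc _] _ _ _] _ _ sc]; have [p P] := sc _ _ (eqP (iL_in ki)) (eqP o).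
by case: nc; apply/cycle_reach1; exists (hv (iL r) ki); apply: path_reach1 P.
Qed.

Lemma R_src (q : hV (rK r)) e : hv (copair (iR r) (oR r)) q \in src e -> exists ki, q = inl ki.
Proof.
case: q => [ki|ko] /= s; first by exists ki.
by move/outdeg0P: (oR_out ko) => /(_ e); rewrite s.
Qed.

Lemma R_eq (q1 q2 : hV (rK r)) : hv (copair (iR r) (oR r)) q1 = hv (copair (iR r) (oR r)) q2 ->
  q1 = q2 \/ (exists ki ko, q1 = inl ki /\ q2 = inr ko) \/ (exists ki ko, q1 = inr ko /\ q2 = inl ki).
Proof.
case: lc => _ [_ _ [[iv _] [ov _]] _ _] _ _.
case: q1 q2 => [a|a] [b|b] /= E.
- by left; rewrite (iv _ _ E).
- by right; left; exists a, b.
- by right; right; exists b, a.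
- by left; rewrite (ov _ _ E).
Qed.
End RuleFacts.

Lemma der_reach (n m : hyp) (r : rule Sg) (G H : cospan n m) mu C c k h rr d :
  left_connected_rule r -> @derivation Sg n m r G H mu C c k h rr d ->
  forall x y, connect (@estep _ (apex H)) (hv (cin H) x) (hv (cout H) y) ->
              connect (@estep _ (apex G)) (hv (cin G) x) (hv (cout G) y).
Proof.
move=> lc D; have dK := rK_dis lc; have [cv ce] := der_c_mono lc D.
case: D => [[[_ maG _ _ hoG] _] [[muv mue] _] sq1 sq2 [/heqE dk /heqE dh]].
have E1 := (proj1 (pushoutE _ _ _ _) sq1).1.
have E2 := (proj1 (pushoutE _ _ _ _) sq2).1.
have Ek q : hv k (hv c q) = hv mu (hv (copair (iL r) (oL r)) q).
  by move: (f_equal (fun F => hv F q) E1).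
have Dconn ki ko : connect (@estep _ (apex G)) (hv k (hv c (inl ki))) (hv k (hv c (inr ko))).
  by rewrite !Ek; apply: hom_conn; apply: L_conn.
have esrc q e : hv c q \in src e -> exists ko, q = inr ko.
  move=> s; apply: (L_out0 lc); apply/outdeg0P => eL; apply/negP => sL.
  have s1 : hv mu (hv (copair (iL r) (oL r)) q) \in src (he mu eL) by rewrite hom_src map_f.
  have s2 : hv mu (hv (copair (iL r) (oL r)) q) \in src (he k e) by rewrite -Ek hom_src map_f.
  exact: (pd_edges_disj dK sq1 (outdeg_le1 (maG.2 _).2 s1 s2)).
move=> x y.
set c0 := hv d (inl x); set cy := hv d (inr y).
have -> : hv (cin H) x = hv h c0 by move: (f_equal (fun F : hom (coprod n m) (apex H) => hv F (inl x)) dh).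
have -> : hv (cout H) y = hv h cy by move: (f_equal (fun F : hom (coprod n m) (apex H) => hv F (inr y)) dh).
have -> : hv (cin G) x = hv k c0 by move: (f_equal (fun F : hom (coprod n m) (apex G) => hv F (inl x)) dk).
have -> : hv (cout G) y = hv k cy by move: (f_equal (fun F : hom (coprod n m) (apex G) => hv F (inr y)) dk).
have cyo : forall q, hv c q = cy -> exists ko, q = inr ko.
  move=> q Eq; apply: (L_out0 lc); apply: (outdeg0_hom (f := mu)); rewrite -Ek Eq.
  have : outdeg (hv (cout G) y) == 0 by apply/eqP/hoG; exists y.
  by move: (f_equal (fun F : hom (coprod n m) (apex G) => hv F (inr y)) dk) => /= ->.
pose U z := (exists c1, hv h c1 = z /\ connect (@estep _ (apex G)) (hv k c0) (hv k c1)) \/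
            (exists rho ki, [/\ hv rr rho = z, connect (@estep _ (rR r)) (hv (iR r) ki) rho &
                             connect (@estep _ (apex G)) (hv k c0) (hv k (hv c (inl ki)))]).
have Uh : forall c1', U (hv h c1') -> (forall q, hv c q = c1' -> exists ko, q = inr ko) ->
    connect (@estep _ (apex G)) (hv k c0) (hv k c1').
  move=> c1' [[c1 [E C1]]|[rho [ki [E CR CG]]]] Hq.
    case: (pd_gg dK sq2 cv E) => [<-//|[q1 [q2 [Eq1 Eq2 Eq]]]].
    have [ko Eko] := Hq q2 (esym Eq2); subst q2.
    case: (R_eq lc Eq) => [Eq'|[[ki [ko' [Eq1' _]]]|[ki [ko' [_ Ebad]]]]] //.
      by rewrite Eq2 -Eq' -Eq1.
    by rewrite Eq2; apply: connect_trans (Dconn ki ko); rewrite -Eq1' -Eq1.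
  have [q [Eq1 Eq2]] := pd_gf dK sq2 cv (esym E).
  have [ko Eko] := Hq q (esym Eq1); subst q.
  by rewrite Eq1; apply: connect_trans (Dconn ki ko).
have Ustep : forall z z', U z -> estep z z' -> U z'.
  move=> z z' Uz /estepP [e [sz tz]].
  case: (pd_cover_e dK sq2 e) => [[eR EeR]|[eC EeC]]; subst e.
  - have [rho1 s1 Er1] := src_map sz; have [rho2 t2 Er2] := tgt_map tz.
    right; exists rho2.
    have [ki [CR CG]] : exists ki, connect (@estep _ (rR r)) (hv (iR r) ki) rho1 /\
                    connect (@estep _ (apex G)) (hv k c0) (hv k (hv c (inl ki))).
      case: Uz => [[c1 [E C1]]|[rho [ki [E CR CG]]]].
        rewrite -Er1 in E; have [q [Eq1 Eq2]] := pd_gf dK sq2 cv E.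
        have [ki Eki] : exists ki, q = inl ki by apply: (R_src lc (e := eR)); rewrite -Eq2.
        by subst q; exists ki; rewrite Eq2 -Eq1; split.
      rewrite -Er1 in E; have := pd_finj dK sq2 cv E => ?; subst rho.
      by exists ki.
    exists ki; split=> //; apply: connect_trans CR _; apply: connect1; apply/estepP; by exists eR.
  - have [c1' s1 Ec1] := src_map sz; have [c2' t2 Ec2] := tgt_map tz.
    left; exists c2'; split=> //.
    have := Uh c1'; rewrite Ec1 => /(_ Uz) C1.
    apply: connect_trans (C1 _) _.
      by move=> q Eq; apply: (esrc q eC); rewrite Eq.
    apply: connect1; apply/estepP; exists (he k eC); by rewrite hom_src hom_tgt !map_f.
have U0 : U (hv h c0) by left; exists c0.
move=> /connectP [p]; elim: p (hv h c0) U0 => [|z p IH] w Uw /=.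
  by move=> _ Ew; apply: Uh; [rewrite Ew | exact: cyo].
by case/andP=> s pth Ez; apply: (IH z (Ustep _ _ Uw s) pth Ez).
Qed.
End Reach.

Section PInj.
Variables (T : finType) (rho : rel T).
Hypotheses (fw : forall u v v', rho u v -> rho u v' -> v = v')
           (bw : forall u u' v, rho u v -> rho u' v -> u = u')
           (ac : forall u v, rho u v -> ~~ connect rho v u).
Definition symc : rel T := fun x y => rho x y || rho y x.
Lemma symc_sym : connect_sym symc.
Proof. by apply: sym_connect_sym => x y; rewrite /symc orbC. Qed.
Definition pdom u := [exists v, rho u v].
Definition pcod v := [exists u, rho u v].

Lemma conn_first u t : connect rho u t -> u != t -> exists2 v, rho u v & connect rho v t.
Proof.
case/connectP=> [[|x s]] /=; first by move=> _ ->; rewrite eqxx.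
by case/andP=> ux px Et _; exists x => //; apply/connectP; exists s.
Qed.
Lemma conn_last t v : connect rho t v -> t != v -> exists2 u, connect rho t u & rho u v.
Proof.
case/connectP=> s; elim: s t => [|x s IH] t /=; first by move=> _ ->; rewrite eqxx.
case/andP=> tx px Ev ne; case: (eqVneq x v) => [Exv|nxv].
  by exists t => //; rewrite -Exv.
have [u xu uv] := IH x px Ev nxv; exists u => //.
by apply: connect_trans xu; apply: connect1.
Qed.

Lemma L1 t w : ~~ pdom t -> connect (symc) w t -> connect rho w t.
Proof.
move=> nt; rewrite symc_sym => /connectP [s]; elim/last_ind: s w => [|s x IH] w /=.
  by move=> _ ->.
rewrite rcons_path last_rcons => /andP [ps sx] ->.
have c := IH _ ps erefl.
case/orP: sx => [l|r]; last by apply: connect_trans c; apply: connect1.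
have ne : last t s != t by apply: contraNneq nt => <-; apply/existsP; exists x.
have [v lv vt] := conn_first c ne.
by rewrite (fw l lv).
Qed.

Lemma L1' t w : ~~ pcod t -> connect (symc) t w -> connect rho t w.
Proof.
move=> nt /connectP [s]; elim/last_ind: s w => [|s x IH] w /=.
  by move=> _ ->.
rewrite rcons_path last_rcons => /andP [ps sx] ->.
have c := IH _ ps erefl.
case/orP: sx => [l|r]; first by apply: connect_trans c _; apply: connect1.
have ne : t != last t s by apply: contraNneq nt => ->; apply/existsP; exists x.
have [u tu uv] := conn_last c ne.
by rewrite (bw r uv).
Qed.

Lemma nondom_uniq t1 t2 : ~~ pdom t1 -> ~~ pdom t2 -> connect (symc) t1 t2 -> t1 = t2.
Proof.
move=> n1 n2 /(L1 n2) c; apply/eqP/negPn/negP => ne.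
have [v lv _] := conn_first c ne; by move/negP: n1; apply; apply/existsP; exists v.
Qed.
Lemma noncod_uniq t1 t2 : ~~ pcod t1 -> ~~ pcod t2 -> connect (symc) t1 t2 -> t1 = t2.
Proof.
move=> n1 n2 /(L1' n1) c; apply/eqP/negPn/negP => ne.
have [u _ uv] := conn_last c ne; by move/negP: n2; apply; apply/existsP; exists u.
Qed.

Lemma L2 a : exists t, connect rho a t /\ ~~ pdom t.
Proof.
move: {2}#|[pred w | connect rho a w]| (leqnn #|[pred w | connect rho a w]|) => k.
elim: k a => [|k IH] a le.
  by move: le; rewrite leqn0 => /eqP/card0_eq/(_ a); rewrite inE connect0.
case: (boolP (pdom a)) => [/existsP [a' aa']|na]; last by exists a.
have sub : [pred w | connect rho a' w] \proper [pred w | connect rho a w].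
  apply/properP; split.
    by apply/subsetP => w; rewrite !inE; apply: connect_trans; apply: connect1.
  by exists a; rewrite !inE ?connect0 //; apply: ac.
have [t [c nt]] := IH a' (leq_trans (proper_card sub) le).
by exists t; split=> //; apply: connect_trans c; apply: connect1.
Qed.

Lemma L2' a : exists t, connect rho t a /\ ~~ pcod t.
Proof.
move: {2}#|[pred w | connect rho w a]| (leqnn #|[pred w | connect rho w a]|) => k.
elim: k a => [|k IH] a le.
  by move: le; rewrite leqn0 => /eqP/card0_eq/(_ a); rewrite inE connect0.
case: (boolP (pcod a)) => [/existsP [a' aa']|na]; last by exists a.
have sub : [pred w | connect rho w a'] \proper [pred w | connect rho w a].
  apply/properP; split.
    by apply/subsetP => w; rewrite !inE => c; apply: connect_trans c _; apply: connect1.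
  by exists a; rewrite !inE ?connect0 //; apply: ac.
have [t [c nt]] := IH a' (leq_trans (proper_card sub) le).
by exists t; split=> //; apply: connect_trans c _; apply: connect1.
Qed.
End PInj.

Section NqDeg.
Variable Sg : signature.
Local Notation hyp := (hyp Sg).
Variables (G : hyp) (r : rel (hV G)).

Lemma nq_indeg u :
  (forall w1 w2, 0 < indeg w1 -> 0 < indeg w2 -> connect (nqe r) w1 w2 -> w1 = w2) ->
  (exists t, connect (nqe r) t u /\ indeg (hv (nq r) u) = indeg t) \/
  (indeg (hv (nq r) u) = 0 /\ forall w, connect (nqe r) w u -> indeg w = 0).
Proof.
move=> U; case: (boolP [exists t, connect (nqe r) t u && (0 < indeg t)]).
  case/existsP=> t /andP [ctu it]; left; exists t; split=> //.
  rewrite /indeg; apply: eq_bigr => e _ /=; rewrite count_map.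
  apply: eq_in_count => w wt /=; rewrite (nqpE r).
  have iw : 0 < indeg w.
    rewrite /indeg (bigD1 e) //= ltn_addr //; rewrite -has_count has_pred1 //.
  apply/idP/eqP => [c|->//]; apply: U => //.
  by apply: connect_trans c _; rewrite (nqe_sym r).
move/existsPn=> H; right.
have H' : forall w, connect (nqe r) w u -> indeg w = 0.
  by move=> w c; move: (H w); rewrite c /= lt0n negbK => /eqP.
split=> //; apply/eqP; rewrite /indeg sum_nat_eq0; apply/forallP => e /=.
rewrite count_map eqn0Ngt -has_count; apply/hasPn => w wt /=.
apply/negP; rewrite (nqpE r) => c.
have : indeg w = 0 by apply: H'.
rewrite /indeg => /eqP; rewrite sum_nat_eq0 => /forallP /(_ e) /=.
by rewrite -leqn0 leqNgt -has_count has_pred1 wt.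
Qed.
Lemma nq_outdeg u :
  (forall w1 w2, 0 < outdeg w1 -> 0 < outdeg w2 -> connect (nqe r) w1 w2 -> w1 = w2) ->
  (exists t, connect (nqe r) t u /\ outdeg (hv (nq r) u) = outdeg t) \/
  (outdeg (hv (nq r) u) = 0 /\ forall w, connect (nqe r) w u -> outdeg w = 0).
Proof.
move=> U; case: (boolP [exists t, connect (nqe r) t u && (0 < outdeg t)]).
  case/existsP=> t /andP [ctu it]; left; exists t; split=> //.
  rewrite /outdeg; apply: eq_bigr => e _ /=; rewrite count_map.
  apply: eq_in_count => w wt /=; rewrite (nqpE r).
  have iw : 0 < outdeg w.
    rewrite /outdeg (bigD1 e) //= ltn_addr //; rewrite -has_count has_pred1 //.
  apply/idP/eqP => [c|->//]; apply: U => //.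
  by apply: connect_trans c _; rewrite (nqe_sym r).
move/existsPn=> H; right.
have H' : forall w, connect (nqe r) w u -> outdeg w = 0.
  by move=> w c; move: (H w); rewrite c /= lt0n negbK => /eqP.
split=> //; apply/eqP; rewrite /outdeg sum_nat_eq0; apply/forallP => e /=.
rewrite count_map eqn0Ngt -has_count; apply/hasPn => w wt /=.
apply/negP; rewrite (nqpE r) => c.
have : outdeg w = 0 by apply: H'.
rewrite /outdeg => /eqP; rewrite sum_nat_eq0 => /forallP /(_ e) /=.
by rewrite -leqn0 leqNgt -has_count has_pred1 wt.
Qed.
End NqDeg.

Section Glue.
Variable Sg : signature.
Local Notation hyp := (hyp Sg).
Variables (n m : hyp) (P : {set hV n * hV m}).
Hypothesis P3 : forall p q, p \in P -> q \in P -> p.1 = q.1 \/ p.2 = q.2 -> p = q.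

Section W.
Variable W : cospan n m.
Local Notation V := (hV (apex W)).
Local Notation ci := (hv (cin W)).
Local Notation co := (hv (cout W)).
Local Notation E := (@estep _ (apex W)).

Definition rW : rel V := fun a b => [exists p in P, (a == ci p.1) && (b == co p.2)].
Definition crel : rel (hV n * hV m) :=
  fun p q => [&& p \in P, q \in P & connect E (ci p.1) (co q.2)].
Definition nochain := forall p q, crel p q -> ~~ connect crel q p.

Lemma rWP a b : reflect (exists2 p, p \in P & a = ci p.1 /\ b = co p.2) (rW a b).
Proof.
apply: (iffP existsP) => [[p /andP [pP /andP [/eqP -> /eqP ->]]]|[p pP [-> ->]]]; exists p => //.
by rewrite pP !eqxx.
Qed.

Hypotheses (maW : is_ma_cospan (cin W) (cout W)) (nc : nochain).

Lemma ciM : injective ci. Proof. by case: maW => _ _ [[]]. Qed.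
Lemma coM : injective co. Proof. by case: maW => _ _ [_ []]. Qed.
Lemma ci_in x : indeg (ci x) = 0. Proof. by case: maW => _ _ _ hi _; apply/hi; exists x. Qed.
Lemma co_out y : outdeg (co y) = 0. Proof. by case: maW => _ _ _ _ ho; apply/ho; exists y. Qed.
Lemma maW' : ma (apex W). Proof. by case: maW. Qed.

Lemma rW_fw u v v' : rW u v -> rW u v' -> v = v'.
Proof.
move=> /rWP [p pP [-> ->]] /rWP [q qP [/ciM E1 ->]].
by rewrite (P3 pP qP (or_introl E1)).
Qed.
Lemma rW_bw u u' v : rW u v -> rW u' v -> u = u'.
Proof.
move=> /rWP [p pP [-> ->]] /rWP [q qP [-> /coM E1]].
by rewrite (P3 pP qP (or_intror E1)).
Qed.

Lemma crel_cycle p q : crel p q -> connect crel q p -> False.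
Proof. by move=> c1 c2; move/negP: (nc c1). Qed.

Lemma LR p w : p \in P -> connect rW (co p.2) w ->
  w = co p.2 \/ exists2 q, q \in P & w = co q.2 /\ connect crel q p.
Proof.
move=> pP /connectP [s]; elim/last_ind: s w => [|s x IH] w /=; first by move=> _ ->; left.
rewrite rcons_path last_rcons => /andP [ps /rWP [p1 p1P [E1 ->]]] ->; right; exists p1 => //.
split=> //; case: (IH _ ps erefl) => [Ep|[q qP [Eq cq]]].
  apply: connect1; rewrite /crel p1P pP /= -E1 Ep; exact: connect0.
apply: connect_trans cq; apply: connect1; rewrite /crel p1P qP /= -E1 Eq; exact: connect0.
Qed.

Lemma rW_ac u v : rW u v -> ~~ connect rW v u.
Proof.
move=> /rWP [p pP [-> ->]]; apply/negP => /(LR pP) [Ep|[q qP [Eq cq]]].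
  by apply: (@crel_cycle p p); [rewrite /crel pP /= Ep connect0 | exact: connect0].
by apply: (@crel_cycle p q); [rewrite /crel pP qP /= Eq connect0 | exact: cq].
Qed.

Lemma dom_in a : pdom rW a -> indeg a = 0.
Proof. by case/existsP=> b /rWP [p _ [-> _]]; apply: ci_in. Qed.
Lemma cod_out b : pcod rW b -> outdeg b = 0.
Proof. by case/existsP=> a /rWP [p _ [_ ->]]; apply: co_out. Qed.

Definition Xrel : rel V := fun a b => E a b || rW b a.

Lemma X_decomp a b : connect Xrel a b -> connect E a b \/
  exists p q, [/\ p \in P, q \in P, connect E a (co p.2), connect crel p q & connect E (ci q.1) b].
Proof.
case/connectP=> s; elim/last_ind: s b => [|s x IH] b /=; first by move=> _ ->; left.
rewrite rcons_path last_rcons => /andP [ps sx] ->.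
case: (IH _ ps erefl) => [c|[p [q [pP qP c1 c2 c3]]]]; case/orP: sx => [st|/rWP [p' p'P [-> Ex]]].
- by left; apply: connect_trans c (connect1 st).
- right; exists p', p'; split=> //; by rewrite -Ex.
- right; exists p, q; split=> //; exact: connect_trans c3 (connect1 st).
- right; exists p, p'; split=> //; apply: connect_trans c2 _; apply: connect1.
  by rewrite /crel qP p'P /= -Ex.
Qed.

Lemma NoX s t : E s t -> ~~ connect Xrel t s.
Proof.
move=> st; apply/negP => /X_decomp [c|[p [q [pP qP c1 c2 c3]]]].
  have := ma_acyclic s maW'; by rewrite (reach1_trans (estep_reach1 st) c).
apply: (@crel_cycle q p) c2; rewrite /crel qP pP /=.
by apply: connect_trans c3 (connect_trans (connect1 st) c1).
Qed.

Lemma rW_rev a b : connect rW a b -> connect Xrel b a.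
Proof.
case/connectP=> s; elim: s a => [|x s IH] a /=; first by move=> _ ->.
case/andP=> ax px Eb; apply: connect_trans (IH x px Eb) (connect1 _).
by rewrite /Xrel ax orbT.
Qed.

Local Notation W' := (nquot rW).
Local Notation q := (nqp rW).

Lemma nondom_uniqW t1 t2 : ~~ pdom rW t1 -> ~~ pdom rW t2 -> connect (nqe rW) t1 t2 -> t1 = t2.
Proof. exact: (nondom_uniq rW_fw). Qed.
Lemma noncod_uniqW t1 t2 : ~~ pcod rW t1 -> ~~ pcod rW t2 -> connect (nqe rW) t1 t2 -> t1 = t2.
Proof. exact: (noncod_uniq rW_bw). Qed.

Lemma estep_W' (u u1 : hV W') : estep u u1 -> exists s t, [/\ E s t, q s = u & q t = u1].
Proof.
case/estepP=> e [/mapP [s se ->] /mapP [t te ->]]; exists s, t; split=> //.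
by apply/estepP; exists e.
Qed.

Lemma lift_conn x0 y : connect (@estep _ W') (q x0) (q y) ->
  exists w, connect Xrel x0 w /\ q w = q y.
Proof.
case/connectP=> s; elim/last_ind: s y => [|s x IH] y /=.
  by move=> _ /esym Ey; exists x0; split.
rewrite rcons_path last_rcons => /andP [ps sx] Ey.
have [w0 Ew0] : exists w0, q w0 = last (q x0) s by exists (val (last (q x0) s)); apply: nqpK.
have [w [c Ew]] := IH w0 ps Ew0.
have [s1 [t1 [st E1 E2]]] := estep_W' sx.
exists t1; split; last by rewrite E2 Ey.
have ns : ~~ pcod rW s1.
  apply/negP => /cod_out /eqP /outdeg0P H; case/estepP: st => e [se _].
  by move: (H e); rewrite se.
have cw : connect rW s1 w.
  apply: (L1' rW_bw ns); change (connect (nqe rW) s1 w).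
  by rewrite -(nqpE rW) E1 Ew Ew0.
apply: connect_trans (connect_trans c (rW_rev cw)) (connect1 _).
by rewrite /Xrel st.
Qed.

Lemma glue_acyclic (u : hV W') : ~~ reach1 u u.
Proof.
apply/negP => /existsP [u1 /andP [/estep_W' [s [t [st E1 E2]]] c]].
rewrite -E1 -E2 in c; have [w [cw Ew]] := lift_conn c.
have ns : ~~ pcod rW s.
  apply/negP => /cod_out /eqP /outdeg0P H; case/estepP: st => e [se _].
  by move: (H e); rewrite se.
have cs : connect rW s w.
  apply: (L1' rW_bw ns); change (connect (nqe rW) s w).
  by rewrite -(nqpE rW) Ew.
by move/negP: (NoX st); apply; apply: connect_trans cw (rW_rev cs).
Qed.

Lemma glue_ma : ma W'.
Proof.
split; first by case/cycle_reach1 => u; apply/negP; apply: glue_acyclic.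
move=> u; rewrite -(nqpK u); split.
- case: (nq_indeg (r := rW) (val u) _) => [w1 w2 i1 i2 c| [t [_ ->]] | [-> _]] //.
    apply: nondom_uniqW => //; apply/negP => /dom_in E0; first [by rewrite E0 in i1 | by rewrite E0 in i2].
  by case: (maW'.2 t).
- case: (nq_outdeg (r := rW) (val u) _) => [w1 w2 i1 i2 c| [t [_ ->]] | [-> _]] //.
    apply: noncod_uniqW => //; apply/negP => /cod_out E0; first [by rewrite E0 in i1 | by rewrite E0 in i2].
  by case: (maW'.2 t).
Qed.

Lemma indeg_nq_pos (w : V) : 0 < indeg w -> 0 < indeg (hv (nq rW) w).
Proof.
rewrite !lt0n => /indeg0P H; apply/indeg0P => H'; apply: H => e; apply/negP => we.
by move: (H' e); rewrite /= map_f.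
Qed.
Lemma outdeg_nq_pos (w : V) : 0 < outdeg w -> 0 < outdeg (hv (nq rW) w).
Proof.
rewrite !lt0n => /outdeg0P H; apply/outdeg0P => H'; apply: H => e; apply/negP => we.
by move: (H' e); rewrite /= map_f.
Qed.

Definition inP1 x := [exists p in P, p.1 == x].
Definition inP2 y := [exists p in P, p.2 == y].

Lemma pdom_ci x : pdom rW (ci x) = inP1 x.
Proof.
apply/existsP/existsP => [[b /rWP [p pP [/ciM -> _]]]|[p /andP [pP /eqP <-]]].
  by exists p; rewrite pP eqxx.
by exists (co p.2); apply/rWP; exists p.
Qed.
Lemma pcod_co y : pcod rW (co y) = inP2 y.
Proof.
apply/existsP/existsP => [[b /rWP [p pP [_ /coM ->]]]|[p /andP [pP /eqP <-]]].
  by exists p; rewrite pP eqxx.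
by exists (ci p.1); apply/rWP; exists p.
Qed.

Lemma conn_nqe a b : connect rW a b -> connect (nqe rW) a b.
Proof. apply: connect_sub => x y r; apply: connect1; by rewrite /nqe r. Qed.

Lemma in_glue (u : hV W') : indeg u = 0 <-> exists2 x, ~~ inP1 x & hv (nq rW) (ci x) = u.
Proof.
split.
  move=> iu; have [t [ct nt]] := L2 rW_ac (val u).
  have Et : hv (nq rW) t = u.
    rewrite -(nqpK u); apply/eqP; rewrite (nqpE rW) (nqe_sym rW); exact: conn_nqe.
  have it : indeg t = 0.
    apply/eqP; rewrite -leqn0 leqNgt; apply/negP => /indeg_nq_pos; by rewrite Et iu.
  case: maW => _ _ _ hi _; have [x Ex] := (hi t).1 it.
  by exists x; rewrite -?pdom_ci Ex.
case=> x nx <-; case: (nq_indeg (r := rW) (ci x) _) => [w1 w2 i1 i2 c| [t [ct ->]] | [-> _]] //.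
  apply: nondom_uniqW => //; apply/negP => /dom_in E0; first [by rewrite E0 in i1 | by rewrite E0 in i2].
case: (boolP (pdom rW t)) => [/dom_in //|nt].
by rewrite (nondom_uniqW nt _ ct) ?ci_in // pdom_ci.
Qed.

Lemma out_glue (u : hV W') : outdeg u = 0 <-> exists2 y, ~~ inP2 y & hv (nq rW) (co y) = u.
Proof.
split.
  move=> iu; have [t [ct nt]] := L2' rW_ac (val u).
  have Et : hv (nq rW) t = u.
    rewrite -(nqpK u); apply/eqP; rewrite (nqpE rW); exact: conn_nqe.
  have it : outdeg t = 0.
    apply/eqP; rewrite -leqn0 leqNgt; apply/negP => /outdeg_nq_pos; by rewrite Et iu.
  case: maW => _ _ _ _ ho; have [y Ey] := (ho t).1 it.
  by exists y; rewrite -?pcod_co Ey.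
case=> y ny <-; case: (nq_outdeg (r := rW) (co y) _) => [w1 w2 i1 i2 c| [t [ct ->]] | [-> _]] //.
  apply: noncod_uniqW => //; apply/negP => /cod_out E0; first [by rewrite E0 in i1 | by rewrite E0 in i2].
case: (boolP (pcod rW t)) => [/cod_out //|nt].
by rewrite (noncod_uniqW nt _ ct) ?co_out // pcod_co.
Qed.

Lemma glue_ci_inj x1 x2 : ~~ inP1 x1 -> ~~ inP1 x2 -> q (ci x1) = q (ci x2) -> x1 = x2.
Proof.
move=> n1 n2 /eqP; rewrite (nqpE rW) => c; apply: ciM; apply: nondom_uniqW => //;
by rewrite pdom_ci.
Qed.
Lemma glue_co_inj y1 y2 : ~~ inP2 y1 -> ~~ inP2 y2 -> q (co y1) = q (co y2) -> y1 = y2.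
Proof.
move=> n1 n2 /eqP; rewrite (nqpE rW) => c; apply: coM; apply: noncod_uniqW => //;
by rewrite pcod_co.
Qed.

Lemma glue_mono (L : hyp) (mu : hom L (apex W)) :
  mono mu -> ma L -> strongly_connected L -> mono (hcomp mu (nq rW)).
Proof.
move=> [muv mue] maL sc; split; last by move=> e1 e2 /= /mue.
have niso (a : hV L) : (indeg a != 0) || (outdeg a != 0).
  rewrite -negb_and; apply/negP => /andP [/eqP i /eqP o].
  have [p Pp] := sc a a i o.
  by have := ma_acyclic a maL; rewrite (path_reach1 Pp).
have EX : subrel (connect E) (connect Xrel).
  by apply: connect_sub => x y st; apply: connect1; rewrite /Xrel st.
have key : forall a b, pdom rW (hv mu a) -> connect (nqe rW) (hv mu a) (hv mu b) -> a = b.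
  move=> a b da c; apply: muv.
  have ia : indeg a = 0 by apply/eqP; apply: (indeg0_hom (f := mu)); rewrite dom_in.
  have oa : outdeg (hv mu a) != 0.
    move: (niso a); rewrite ia eqxx /=; apply: contraNneq => H.
    by apply: (outdeg0_hom (f := mu)); rewrite H.
  have nca : ~~ pcod rW (hv mu a) by apply: contra oa => /cod_out ->.
  have cr := L1' rW_bw nca c.
  case: (eqVneq (hv mu a) (hv mu b)) => // ne.
  have [u _ ub] := conn_last cr ne.
  have ob : outdeg b = 0.
    apply/eqP; apply: (outdeg0_hom (f := mu)); rewrite cod_out //; by apply/existsP; exists u.
  have [p Pp] := sc a b ia ob.
  case/existsP: (hom_reach1 mu (path_reach1 Pp)) => t /andP [st ct].
  by move/negP: (NoX st); case; apply: connect_trans (EX _ _ ct) (rW_rev cr).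
move=> a b /= /eqP; rewrite (nqpE rW) => c.
case: (boolP (pdom rW (hv mu a))) => [da|na]; first exact: key da c.
case: (boolP (pdom rW (hv mu b))) => [db|nb].
  by apply/esym/key => //; rewrite (nqe_sym rW).
by apply: muv; apply: nondom_uniqW.
Qed.
End W.
End Glue.

Section GlueC.
Variable Sg : signature.
Local Notation hyp := (hyp Sg).
Variables (n m : hyp) (P : {set hV n * hV m}).
Hypothesis P3 : forall p q, p \in P -> q \in P -> p.1 = q.1 \/ p.2 = q.2 -> p = q.
Variables (Vi Vo : finType) (si : Vi -> hV n) (so : Vo -> hV m).
Hypotheses (si_inj : injective si) (so_inj : injective so)
  (si_im : forall x, ~~ inP1 P x <-> exists x', si x' = x)
  (so_im : forall y, ~~ inP2 P y <-> exists y', so y' = y).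
Local Notation n' := (discrete_of Sg Vi).
Local Notation m' := (discrete_of Sg Vo).

Definition glueC (W : cospan n m) : cospan n' m' :=
  @Cospan Sg n' m' (nquot (@rW Sg n m P W))
    (dhom (fun x' => hv (nq (@rW Sg n m P W)) (hv (cin W) (si x'))))
    (dhom (fun y' => hv (nq (@rW Sg n m P W)) (hv (cout W) (so y')))).

Lemma glueC_ma (W : cospan n m) : is_ma_cospan (cin W) (cout W) -> nochain P W ->
  is_ma_cospan (cin (glueC W)) (cout (glueC W)).
Proof.
move=> mW nc; split.
- by split; apply: discrete_of_dis.
- exact: glue_ma.
- split; split; try by case.
  + move=> x1 x2 /= E; apply: si_inj; apply: (glue_ci_inj P3 mW) E.
    * by apply/(si_im _).2; exists x1.
    * by apply/(si_im _).2; exists x2.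
  + move=> x1 x2 /= E; apply: so_inj; apply: (glue_co_inj P3 mW) E.
    * by apply/(so_im _).2; exists x1.
    * by apply/(so_im _).2; exists x2.
- move=> u; split.
    by move/(in_glue P3 mW nc) => [x /(si_im _).1 [x' <-] <-]; exists x'.
  by case=> x' <-; apply/(in_glue P3 mW nc); exists (si x') => //; apply/(si_im _).2; exists x'.
- move=> u; split.
    by move/(out_glue P3 mW nc) => [y /(so_im _).1 [y' <-] <-]; exists y'.
  by case=> y' <-; apply/(out_glue P3 mW nc); exists (so y') => //; apply/(so_im _).2; exists y'.
Qed.

Section IsoT.
Variables (W1 W2 : cospan n m) (phi : hom (apex W1) (apex W2)).
Hypotheses (ei : hcomp (cin W1) phi = cin W2) (eo : hcomp (cout W1) phi = cout W2).
Lemma glue_resp : forall a b, @rW Sg n m P W1 a b -> hv (hcomp phi (nq (@rW Sg n m P W2))) a = hv (hcomp phi (nq (@rW Sg n m P W2))) b.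
Proof.
move=> a b /rWP [p pP [-> ->]] /=; apply: nq_rel; apply/rWP; exists p => //.
by rewrite -ei -eo.
Qed.
Definition glue_map : hom (apex (glueC W1)) (apex (glueC W2)) := nqlift glue_resp.
Lemma glue_mapK : hcomp (nq (@rW Sg n m P W1)) glue_map = hcomp phi (nq (@rW Sg n m P W2)).
Proof. exact: nqliftK. Qed.
End IsoT.

Lemma glue_iso (W1 W2 : cospan n m) : cospan_iso W1 W2 -> cospan_iso (glueC W1) (glueC W2).
Proof.
case=> phi [psi [/heqE p1 /heqE p2 /heqE i1 /heqE o1]].
have i2 : hcomp (cin W2) psi = cin W1 by rewrite -i1 hcompA p1 hcomph1.
have o2 : hcomp (cout W2) psi = cout W1 by rewrite -o1 hcompA p1 hcomph1.
have K1 : hcomp (glue_map i1 o1) (glue_map i2 o2) = hid _.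
  apply: (@nq_epi_eq _ _ _ (@rW Sg n m P W1)).
  rewrite -hcompA glue_mapK hcompA glue_mapK -hcompA p1 hcomp1h hcomph1 //.
have K2 : hcomp (glue_map i2 o2) (glue_map i1 o1) = hid _.
  apply: (@nq_epi_eq _ _ _ (@rW Sg n m P W2)).
  rewrite -hcompA glue_mapK hcompA glue_mapK -hcompA p2 hcomp1h hcomph1 //.
exists (glue_map i1 o1), (glue_map i2 o2); rewrite K1 K2; split; try exact: heqR.
- split=> [x|[]] /=.
  have := f_equal (fun F => hv F (hv (cin W1) (si x))) (glue_mapK i1 o1) => /= ->.
  by rewrite -i1.
- split=> [x|[]] /=.
  have := f_equal (fun F => hv F (hv (cout W1) (so x))) (glue_mapK i1 o1) => /= ->.
  by rewrite -o1.
Qed.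

Lemma nochain_sub (W1 W2 : cospan n m) :
  (forall x y, connect (@estep _ (apex W2)) (hv (cin W2) x) (hv (cout W2) y) ->
               connect (@estep _ (apex W1)) (hv (cin W1) x) (hv (cout W1) y)) ->
  nochain P W1 -> nochain P W2.
Proof.
move=> H nc p q c1 ; apply/negP => c2.
have sub : subrel (@crel Sg n m P W2) (@crel Sg n m P W1).
  by move=> a b /and3P [aP bP c]; rewrite /crel aP bP H.
move/negP: (nc p q (sub _ _ c1)); apply.
by apply: (connect_sub _ c2) => a b /sub /connect1.
Qed.

Lemma nochain_iso (W1 W2 : cospan n m) : cospan_iso W1 W2 -> nochain P W1 -> nochain P W2.
Proof.
case=> phi [psi [/heqE p1 /heqE p2 /heqE i1 /heqE o1]]; apply: nochain_sub => x y.
move/(hom_conn psi); rewrite -i1 -o1 /=.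
have Hid v : hv psi (hv phi v) = v by move: (f_equal (fun F => hv F v) p1).
by rewrite !Hid.
Qed.
End GlueC.

Section PO2.
Variable Sg : signature.
Local Notation hyp := (hyp Sg).

Section CoeqSq.
Variables (C D : hyp) (h : hom C D) (r : rel (hV C)) (r' : rel (hV D)).
Hypotheses (Hr : forall a b, r a b -> r' (hv h a) (hv h b))
  (Hr' : forall a' b', r' a' b' -> exists a b, [/\ r a b, a' = hv h a & b' = hv h b]).
Lemma qbar_resp a b : r a b -> hv (hcomp h (nq r')) a = hv (hcomp h (nq r')) b.
Proof. by move=> /Hr rab /=; apply: nq_rel. Qed.
Definition qbar := nqlift qbar_resp.
Lemma qbarK : hcomp (nq r) qbar = hcomp h (nq r'). Proof. exact: nqliftK. Qed.
Lemma coeq_pushout : pushout h (nq r) (nq r') qbar.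
Proof.
apply/pushoutE; split; first by rewrite qbarK.
move=> T u v E.
have ur : forall a' b', r' a' b' -> hv u a' = hv u b'.
  move=> a' b' /Hr' [a [b [rab -> ->]]].
  have := f_equal (fun F => hv F a) E; have := f_equal (fun F => hv F b) E => /= -> ->.
  by have := nq_rel rab => /= ->.
exists (nqlift ur); split; first exact: nqliftK.
  apply: (@nq_epi_eq _ _ _ r); rewrite -hcompA qbarK hcompA nqliftK //.
by move=> u' e1 e2; apply: nqlift_uniq.
Qed.
End CoeqSq.

Lemma pushout_paste (A B C D E F : hyp) (f : hom A B) (g : hom A C) (f' : hom B D) (g' : hom C D)
  (k : hom C E) (g'' : hom D F) (k' : hom E F) :
  pushout f g f' g' -> pushout g' k g'' k' -> pushout f (hcomp g k) (hcomp f' g'') k'.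
Proof.
move=> /pushoutE [E1 U1] /pushoutE [E2 U2]; apply/pushoutE; split.
  by rewrite -hcompA E1 !hcompA E2.
move=> T h l hl.
have hl' : hcomp f h = hcomp g (hcomp k l) by rewrite hl hcompA.
have [u1 [a1 b1 c1]] := U1 T h (hcomp k l) hl'.
have [u2 [a2 b2 c2]] := U2 T u1 l b1.
exists u2; split=> //; first by rewrite hcompA a2.
move=> w ew1 ew2; apply: c2 => //; apply: c1; first by rewrite -hcompA.
by rewrite -hcompA E2 hcompA ew2.
Qed.
End PO2.

Section DT.
Variable Sg : signature.
Local Notation hyp := (hyp Sg).
Variables (n m : hyp) (P : {set hV n * hV m}).
Hypothesis P3 : forall p q, p \in P -> q \in P -> p.1 = q.1 \/ p.2 = q.2 -> p = q.
Variables (Vi Vo : finType) (si : Vi -> hV n) (so : Vo -> hV m).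
Hypotheses (si_inj : injective si) (so_inj : injective so)
  (si_im : forall x, ~~ inP1 P x <-> exists x', si x' = x)
  (so_im : forall y, ~~ inP2 P y <-> exists y', so y' = y).
Local Notation n' := (discrete_of Sg Vi).
Local Notation m' := (discrete_of Sg Vo).
Local Notation gl W := (glueC P si so W).
Local Notation rWW W := (@rW Sg n m P W).

Lemma der_glue (r : rule Sg) (W1 W2 : cospan n m) mu C c k h rr d :
  left_connected_rule r -> @derivation Sg n m r W1 W2 mu C c k h rr d ->
  nochain P W1 -> nochain P W2 ->
  exists C' c' k' h' rr' d',
    @derivation Sg n' m' r (gl W1) (gl W2) (hcomp mu (nq (rWW W1))) C' c' k' h' rr' d'.
Proof.
move=> lc D nc1 nc2; have D0 := D.
case: D => [[mW1 mW2] [mmu _] sq1 sq2 [/heqE dk /heqE dh]].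
pose rC : rel (hV C) := fun a b => [exists p in P, (a == hv d (inl p.1)) && (b == hv d (inr p.2))].
have dkl x : hv k (hv d (inl x)) = hv (cin W1) x by move: (f_equal (fun F : hom (coprod n m) (apex W1) => hv F (inl x)) dk).
have dkr y : hv k (hv d (inr y)) = hv (cout W1) y by move: (f_equal (fun F : hom (coprod n m) (apex W1) => hv F (inr y)) dk).
have dhl x : hv h (hv d (inl x)) = hv (cin W2) x by move: (f_equal (fun F : hom (coprod n m) (apex W2) => hv F (inl x)) dh).
have dhr y : hv h (hv d (inr y)) = hv (cout W2) y by move: (f_equal (fun F : hom (coprod n m) (apex W2) => hv F (inr y)) dh).
have Hk : forall a b, rC a b -> rWW W1 (hv k a) (hv k b).
  move=> a b /existsP [p /andP [pP /andP [/eqP -> /eqP ->]]]; apply/rWP; exists p => //.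
have Hk' : forall a' b', rWW W1 a' b' -> exists a b, [/\ rC a b, a' = hv k a & b' = hv k b].
  move=> a' b' /rWP [p pP [-> ->]]; exists (hv d (inl p.1)), (hv d (inr p.2)).
  split; [apply/existsP; exists p; by rewrite pP !eqxx | exact: (esym (dkl _)) | exact: (esym (dkr _))].
have Hh : forall a b, rC a b -> rWW W2 (hv h a) (hv h b).
  move=> a b /existsP [p /andP [pP /andP [/eqP -> /eqP ->]]]; apply/rWP; exists p => //.
have Hh' : forall a' b', rWW W2 a' b' -> exists a b, [/\ rC a b, a' = hv h a & b' = hv h b].
  move=> a' b' /rWP [p pP [-> ->]]; exists (hv d (inl p.1)), (hv d (inr p.2)).
  split; [apply/existsP; exists p; by rewrite pP !eqxx | exact: (esym (dhl _)) | exact: (esym (dhr _))].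
have sqL := pushout_paste sq1 (coeq_pushout Hk Hk').
have sqR := pushout_paste sq2 (coeq_pushout Hh Hh').
pose d' := copair (dhom (fun x' : Vi => hv (nq rC) (hv d (inl (si x')))))
                  (dhom (fun y' : Vo => hv (nq rC) (hv d (inr (so y'))))).
exists (nquot rC), (hcomp c (nq rC)), (qbar Hk), (qbar Hh), (hcomp rr (nq (rWW W2))), d'.
have Kk z : hv (qbar Hk) (hv (nq rC) z) = hv (nq (rWW W1)) (hv k z).
  by move: (f_equal (fun F => hv F z) (qbarK Hk)).
have Kh z : hv (qbar Hh) (hv (nq rC) z) = hv (nq (rWW W2)) (hv h z).
  by move: (f_equal (fun F => hv F z) (qbarK Hh)).
have maL : ma (rL r) by case: lc => [[_ ?]].
have scL : strongly_connected (rL r) by case: lc.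
split=> //.
- by split; apply: (glueC_ma P3 si_inj so_inj si_im so_im).
- apply: mono_convex => //.
    exact: (glue_mono P3 mW1 nc1).
  exact: (glue_ma P3 mW1 nc1).
- split; split; try by case=> [[]|[]].
  + case=> x; [exact: (etrans (Kk _) (congr1 _ (dkl _))) | exact: (etrans (Kk _) (congr1 _ (dkr _)))].
  + case=> x; [exact: (etrans (Kh _) (congr1 _ (dhl _))) | exact: (etrans (Kh _) (congr1 _ (dhr _)))].
Qed.

Section Sys.
Variables (Idx : finType) (Rs : Idx -> rule Sg) (HR : forall i, left_connected_rule (Rs i)).

Lemma der_nochain (r : rule Sg) (W1 W2 : cospan n m) mu C c k h rr d :
  left_connected_rule r -> @derivation Sg n m r W1 W2 mu C c k h rr d ->
  nochain P W1 -> nochain P W2.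
Proof. by move=> lc D; apply: nochain_sub => x y; apply: (der_reach lc D). Qed.

Lemma step_glue (W1 W2 : cospan n m) : step Rs W1 W2 -> nochain P W1 ->
  step Rs (gl W1) (gl W2) /\ nochain P W2.
Proof.
case=> i [mu [C [c [k [h [rr [d D]]]]]]] nc1.
have nc2 := der_nochain (HR i) D nc1.
have [C' [c' [k' [h' [rr' [d' D']]]]]] := der_glue (HR i) D nc1 nc2.
by split=> //; exists i, (hcomp mu (nq (rWW W1))), C', c', k', h', rr', d'.
Qed.

Lemma rewrites_glue (W1 W2 : cospan n m) : rewrites Rs W1 W2 -> nochain P W1 ->
  rewrites Rs (gl W1) (gl W2) /\ nochain P W2.
Proof.
elim=> [G|G H K s _ IH] nc; first by split=> //; apply: rw_refl.
have [s' ncH] := step_glue s nc; have [r' ncK] := IH ncH.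
by split=> //; apply: rw_step r'.
Qed.

Lemma joinable_glue (H1 H2 : cospan n m) : joinable Rs H1 H2 -> nochain P H1 -> nochain P H2 ->
  joinable Rs (gl H1) (gl H2).
Proof.
case=> W1 [W2 [R1 R2 I]] n1 n2.
have [R1' _] := rewrites_glue R1 n1; have [R2' _] := rewrites_glue R2 n2.
by exists (gl W1), (gl W2); split=> //; apply: glue_iso.
Qed.
End Sys.
End DT.

Section Main.
Variable Sg : signature.
Local Notation hyp := (hyp Sg).
Variables (S S' : hyp) (N : {set hV S * hV S}) (eps' : hom S S').
Hypotheses (Heps' : node_coeq N eps')
  (HNa : forall a b, (a, b) \in N -> [/\ indeg a = 0, outdeg b = 0 & outdeg a != 0])
  (HNd : forall p q x, p \in N -> q \in N -> (x = p.1 \/ x = p.2) -> (x = q.1 \/ x = q.2) -> p = q)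
  (maS : is_ma_cospan (inIncl S) (outIncl S)) (maS' : ma S').

Local Notation n := (inD S).
Local Notation m := (outD S).
Definition PS : {set hV n * hV m} := [set p | (val p.1, val p.2) \in N].

Lemma PS3 p q : p \in PS -> q \in PS -> p.1 = q.1 \/ p.2 = q.2 -> p = q.
Proof.
rewrite !inE => pN qN H.
have E : (val p.1, val p.2) = (val q.1, val q.2).
  case: H => E.
    have := HNd pN qN (or_introl (erefl (val p.1))); rewrite E; apply; by left.
  have := HNd pN qN (or_intror (erefl (val p.2))); rewrite E; apply; by right.
by case: p q E {pN qN H} => [a b] [c d] /= [/val_inj -> /val_inj ->].
Qed.

Local Notation rS := (@rW Sg n m PS (ioCospan S)).

Lemma rS_N a b : rS a b = ((a, b) \in N).
Proof.
apply/rWP/idP => [[p pP [-> ->]]|abN]; first by move: pP; rewrite inE.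
have [ia ob _] := HNa abN.
exists (exist _ a (introT eqP ia), exist _ b (introT eqP ob)) => //.
by rewrite inE.
Qed.

Lemma eps'_resp a b : rS a b -> hv eps' a = hv eps' b.
Proof. by rewrite rS_N => abN; case: Heps' => [[R _] _]; apply: R. Qed.
Definition theta : hom (nquot rS) S' := nqlift eps'_resp.
Lemma thetaK : hcomp (nq rS) theta = eps'. Proof. exact: nqliftK. Qed.

Lemma theta_iso : exists theta' : hom S' (nquot rS),
  hcomp theta theta' = hid _ /\ hcomp theta' theta = hid _.
Proof.
case: Heps' => _ U.
have resp : respects (fun x y => (x, y) \in N) (fun _ _ => False) (nq rS).
  by split=> // x y xyN; apply: nq_rel; rewrite rS_N.
have [th' [/heqE E _]] := U _ _ resp.
exists th'; split.
  by apply: (@nq_epi_eq _ _ _ rS); rewrite -hcompA thetaK E hcomph1.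
have r2 : respects (fun x y => (x, y) \in N) (fun _ _ => False) eps' by case: Heps'.
have [w [_ Uw]] := U _ _ r2.
rewrite (heqE (Uw (hid _) _)); last by split.
by apply: heqE; apply: Uw; rewrite -hcompA E thetaK; split.
Qed.

Lemma theta_inj : injective (hv theta).
Proof.
have [th' [E _]] := theta_iso; move=> x y /(congr1 (hv th')).
by have := f_equal (fun F => hv F x) E; have := f_equal (fun F => hv F y) E => /= -> ->.
Qed.

Lemma theta_isoP : iso theta.
Proof. by have [th' [E1 E2]] := theta_iso; exists th'. Qed.

Lemma conn_reach1 (G : hyp) (a b : hV G) : connect (@estep _ G) a b -> a != b -> reach1 a b.
Proof.
case/connectP=> [[|x p]] /=; first by move=> _ ->; rewrite eqxx.
case/andP=> ax px Eb _; apply/existsP; exists x; rewrite ax /=.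
by apply/connectP; exists p.
Qed.

Lemma ncS : nochain PS (ioCospan S).
Proof.
have key : forall p q, @crel Sg n m PS (ioCospan S) p q ->
    reach1 (hv (nq rS) (val p.1)) (hv (nq rS) (val q.1)).
  move=> p q /and3P [pP qP c].
  have pN : (val p.1, val p.2) \in N by move: pP; rewrite inE.
  have qN : (val q.1, val q.2) \in N by move: qP; rewrite inE.
  have [_ _ op] := HNa pN; have [_ oq _] := HNa qN.
  have ne : val p.1 != val q.2 by apply: contraNneq op => ->; rewrite oq.
  have := hom_reach1 (nq rS) (conn_reach1 c ne).
  have -> : hv (nq rS) (val q.2) = hv (nq rS) (val q.1); last exact.
  by apply/esym/nq_rel/rWP; exists q.
move=> p q c1; apply/negP => c2.
have c3 : connect (@estep _ (nquot rS)) (hv (nq rS) (val q.1)) (hv (nq rS) (val p.1)).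
  move: c2; move: (q) => q0 /connectP [s]; elim: s q0 => [|x s IH] q' /=; first by move=> _ ->.
  by case/andP=> cx px El; apply: connect_trans (reach1_conn (key _ _ cx)) (IH _ px El).
have := ma_acyclic (hv theta (hv (nq rS) (val p.1))) maS'.
by rewrite (hom_reach1 theta (reach1_trans (key _ _ c1) c3)).
Qed.

Local Notation Vi := {v : hV S' | indeg v == 0}.
Local Notation Vo := {v : hV S' | outdeg v == 0}.

Lemma si_ex (x' : Vi) : exists x : hV n, ~~ inP1 PS x && (hv theta (hv (nq rS) (val x)) == val x').
Proof.
have [th' [E1 E2]] := theta_iso.
have Eu : hv theta (hv th' (val x')) = val x' by move: (f_equal (fun F => hv F (val x')) E2).
have iu : indeg (hv th' (val x')) = 0 by rewrite -(indeg_iso theta_isoP) Eu; apply/eqP; exact: (valP x').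
have [x nx Ex] := (in_glue (W := ioCospan S) PS3 maS ncS (hv th' (val x'))).1 iu.
by exists x; rewrite nx /=; apply/eqP; rewrite -Eu -Ex.
Qed.
Lemma so_ex (y' : Vo) : exists y : hV m, ~~ inP2 PS y && (hv theta (hv (nq rS) (val y)) == val y').
Proof.
have [th' [E1 E2]] := theta_iso.
have Eu : hv theta (hv th' (val y')) = val y' by move: (f_equal (fun F => hv F (val y')) E2).
have iu : outdeg (hv th' (val y')) = 0 by rewrite -(outdeg_iso theta_isoP) Eu; apply/eqP; exact: (valP y').
have [y ny Ey] := (out_glue (W := ioCospan S) PS3 maS ncS (hv th' (val y'))).1 iu.
by exists y; rewrite ny /=; apply/eqP; rewrite -Eu -Ey.
Qed.

Definition sigi (x' : Vi) : hV n := xchoose (si_ex x').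
Definition sigo (y' : Vo) : hV m := xchoose (so_ex y').
Lemma sigiP x' : ~~ inP1 PS (sigi x') /\ hv theta (hv (nq rS) (val (sigi x'))) = val x'.
Proof. by have /andP [a /eqP b] := xchooseP (si_ex x'). Qed.
Lemma sigoP y' : ~~ inP2 PS (sigo y') /\ hv theta (hv (nq rS) (val (sigo y'))) = val y'.
Proof. by have /andP [a /eqP b] := xchooseP (so_ex y'). Qed.

Lemma sigi_inj : injective sigi.
Proof.
move=> x1 x2 E; apply: val_inj; rewrite -(sigiP x1).2 -(sigiP x2).2; by rewrite E.
Qed.
Lemma sigo_inj : injective sigo.
Proof.
move=> x1 x2 E; apply: val_inj; rewrite -(sigoP x1).2 -(sigoP x2).2; by rewrite E.
Qed.

Lemma sigi_im x : ~~ inP1 PS x <-> exists x', sigi x' = x.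
Proof.
split; last by case=> x' <-; exact: (sigiP x').1.
move=> nx; set v := hv theta (hv (nq rS) (val x)).
have iv : indeg v == 0.
  rewrite /v (indeg_iso theta_isoP); apply/eqP; apply/(in_glue (W := ioCospan S) PS3 maS ncS); by exists x.
exists (exist _ v iv); apply: (glue_ci_inj (W := ioCospan S) PS3 maS) => //; first exact: (sigiP _).1.
by apply: theta_inj; rewrite (sigiP _).2.
Qed.
Lemma sigo_im y : ~~ inP2 PS y <-> exists y', sigo y' = y.
Proof.
split; last by case=> y' <-; exact: (sigoP y').1.
move=> ny; set v := hv theta (hv (nq rS) (val y)).
have iv : outdeg v == 0.
  rewrite /v (outdeg_iso theta_isoP); apply/eqP; apply/(out_glue (W := ioCospan S) PS3 maS ncS); by exists y.
exists (exist _ v iv); apply: (glue_co_inj (W := ioCospan S) PS3 maS) => //; first exact: (sigoP _).1.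
by apply: theta_inj; rewrite (sigoP _).2.
Qed.

Lemma gl_iso : cospan_iso (ioCospan S') (glueC PS sigi sigo (ioCospan S)).
Proof.
have [th' [E1 E2]] := theta_iso.
have Kth v : hv theta (hv th' v) = v by move: (f_equal (fun F => hv F v) E2).
exists th', theta; rewrite E1 E2; split; try exact: heqR.
- split=> [x|[]] /=; apply: theta_inj; by rewrite Kth (sigiP x).2.
- split=> [x|[]] /=; apply: theta_inj; by rewrite Kth (sigoP x).2.
Qed.

Section Sys.
Variables (Idx : finType) (Rs : Idx -> rule Sg) (HR : forall i, left_connected_rule (Rs i)).

Lemma transfer i j (m1 : hom (rL (Rs i)) S) (m2 : hom (rL (Rs j)) S) :
  (exists H1 C1 c1 k1 h1 r1 d1, @derivation _ _ _ (Rs i) (ioCospan S) H1 m1 C1 c1 k1 h1 r1 d1) ->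
  (exists H2 C2 c2 k2 h2 r2 d2, @derivation _ _ _ (Rs j) (ioCospan S) H2 m2 C2 c2 k2 h2 r2 d2) ->
  cp_joinable Rs i j m1 m2 -> cp_joinable Rs i j (hcomp m1 eps') (hcomp m2 eps').
Proof.
move=> [H1 [C1 [c1 [k1 [h1 [r1 [d1 D1]]]]]]] [H2 [C2 [c2 [k2 [h2 [r2 [d2 D2]]]]]]] Hj.
move=> H1' C1' c1' k1' h1' r1' d1' H2' C2' c2' k2' h2' r2' d2' D1' D2'.
have J := Hj _ _ _ _ _ _ _ _ _ _ _ _ _ _ D1 D2.
have nc1 := der_nochain (HR i) D1 ncS.
have nc2 := der_nochain (HR j) D2 ncS.
have Jg := joinable_glue PS3 sigi_inj sigo_inj sigi_im sigo_im HR J nc1 nc2.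
have [th' [E1 E2]] := theta_iso.
have [phi [psi [_ _ /heqE ei /heqE eo]]] := gl_iso.
have ei' : hcomp (cin (ioCospan S')) th' = cin (glueC PS sigi sigo (ioCospan S)).
  apply: hom_ext => [x|[]]; apply: theta_inj.
  have := f_equal (fun F => hv F (val x)) E2 => /= ->; exact: (esym (sigiP x).2).
have eo' : hcomp (cout (ioCospan S')) th' = cout (glueC PS sigi sigo (ioCospan S)).
  apply: hom_ext => [x|[]]; apply: theta_inj.
  have := f_equal (fun F => hv F (val x)) E2 => /= ->; exact: (esym (sigoP x).2).
have [C1g [c1g [k1g [h1g [r1g [d1g Dg1]]]]]] :=
  der_glue PS3 sigi_inj sigo_inj sigi_im sigo_im (HR i) D1 ncS nc1.
have [C2g [c2g [k2g [h2g [r2g [d2g Dg2]]]]]] :=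
  der_glue PS3 sigi_inj sigo_inj sigi_im sigo_im (HR j) D2 ncS nc2.
have Dg1' := derivation_isoL (G' := ioCospan S') (G := glueC PS sigi sigo (ioCospan S)) (phi := th') (psi := theta) (HR i) E2 E1 ei' eo' Dg1.
have Dg2' := derivation_isoL (G' := ioCospan S') (G := glueC PS sigi sigo (ioCospan S)) (phi := th') (psi := theta) (HR j) E2 E1 ei' eo' Dg2.
rewrite hcompA thetaK in Dg1'; rewrite hcompA thetaK in Dg2'.
have I1 := derivation_uniq (HR i) Dg1' D1'.
have I2 := derivation_uniq (HR j) Dg2' D2'.
exact: (joinable_iso HR (cospan_iso_sym I1) (cospan_iso_sym I2) Jg).
Qed.
End Sys.
End Main.

Lemma L_noniso (Sg : signature) (r : rule Sg) (v : hV (rL r)) :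
  left_connected_rule r -> indeg v = 0 -> exists e, v \in src e.
Proof.
case=> [[_ [nc _] _ _ _] _ _ sc] iv.
case: (boolP [exists e, v \in src e]) => [/existsP [e ?]|/existsPn H]; first by exists e.
have ov : outdeg v = 0 by apply/eqP/outdeg0P => e; apply: H.
have [p Pp] := sc v v iv ov.
by case: nc; apply/cycle_reach1; exists v; apply: path_reach1 Pp.
Qed.

Lemma eps_out (Sg : signature) (A B S : hyp Sg) (eps : hom (coprod A B) S) (x : hV S) :
  ((exists v : hV A, (exists e, v \in src e) /\ hv eps (inl v) = x) \/
   (exists v : hV B, (exists e, v \in src e) /\ hv eps (inr v) = x)) -> outdeg x != 0.
Proof.
case=> [[v [[e ve] <-]]|[v [[e ve] <-]]]; apply/negP => /outdeg0P H.
  by move: (H (he eps (inl e))); rewrite hom_src /= (map_f _ (map_f _ ve)).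
by move: (H (he eps (inr e))); rewrite hom_src /= (map_f _ (map_f _ ve)).
Qed.

Theorem mainTheorem10 (Sg : signature) (Idx : finType) (Rs : Idx -> rule Sg)
  (HR : forall i, left_connected_rule (Rs i))
  (i j : Idx)
  (M : {set hE (rL (Rs i)) * hE (rL (Rs j))}) (HM : hedge_gluing M)
  (S : hyp Sg) (eps : hom (coprod (rL (Rs i)) (rL (Rs j))) S)
  (Heps : hedge_coeq M eps)
  (N : {set hV S * hV S}) (HN : node_gluing eps N)
  (S' : hyp Sg) (eps' : hom S S') (Heps' : node_coeq N eps')
  (Hcp' : yields_cp Rs i j (hcomp (hcomp (iota1 _ _) eps) eps')
                           (hcomp (hcomp (iota2 _ _) eps) eps'))
  (Hcp : yields_cp Rs i j (hcomp (iota1 _ _) eps) (hcomp (iota2 _ _) eps))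
  (Hj : cp_joinable Rs i j (hcomp (iota1 _ _) eps) (hcomp (iota2 _ _) eps)) :
  cp_joinable Rs i j (hcomp (hcomp (iota1 _ _) eps) eps')
                     (hcomp (hcomp (iota2 _ _) eps) eps').
Proof.
case: HN => HN1 HNd.
have HNa : forall a b, (a, b) \in N -> [/\ indeg a = 0, outdeg b = 0 & outdeg a != 0].
  move=> a b abN; case: HN1 => H; have [[ia [v [iv Ev]]] [ob _]] := H _ abN; split=> //.
    by apply: eps_out; left; exists v; split; [exact: L_noniso (HR i) iv | exact: Ev].
  by apply: eps_out; right; exists v; split; [exact: L_noniso (HR j) iv | exact: Ev].
case: Hcp => _ _ maS [H1 [C1 [c1 [k1 [h1 [r1 [d1 [H2 [C2 [c2 [k2 [h2 [r2 [d2 [D1 D2 _ _]]]]]]]]]]]]]]].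
case: Hcp' => _ _ [_ maS' _ _ _] _.
apply: (transfer Heps' HNa HNd maS maS' HR) Hj.
  by exists H1, C1, c1, k1, h1, r1, d1.
by exists H2, C2, c2, k2, h2, r2, d2.
Qed.
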